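(* Let $a,b\in\mathbb{C}$ with $a,b,a+b\notin\{0,-1\}$, and suppose $a\ne b$, $a\ne1$, $b\ne1$. Then $R_{a,b}$ has rank $6$ as a module over $\mathbb{C}[P_2,P_3]$.
   Context: For $a,b\in\mathbb{C}$, let $P_i=ax^i+by^i+(-ax-by)^i\in\mathbb{C}[x,y]$ for $i\ge2$, and let $R_{a,b}$ be the subalgebra of $\mathbb{C}[x,y]$ generated by the $P_i$, $i\ge2$. *)

(* Defs.v *)
(* C := complex numbers = (Stdlib R)[i] from mathcomp-real-closed;
   C[x,y] is represented as {poly {poly C}} with x := 'X%:P (inner variable)
   and y := 'X (outer variable). *)
From HB Require Import structures.
From mathcomp Require Import all_boot all_order all_algebra.
From mathcomp Require Import complex Rstruct.
Set Implicit Arguments. Unset Strict Implicit. Unset Printing Implicit Defensive.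
Import Order.TTheory GRing.Theory Num.Theory.
Local Open Scope ring_scope.

Definition CC : Type := complex Rdefinitions.R.

Definition Cxy := {poly {poly CC}}.
Definition varx : Cxy := 'X%:P.
Definition vary : Cxy := 'X.
Definition cstxy (c : CC) : Cxy := c%:P%:P.

Definition Pab (a b : CC) (i : nat) : Cxy :=
  cstxy a * varx ^+ i + cstxy b * vary ^+ i
  + (- (cstxy a * varx) - cstxy b * vary) ^+ i.

Inductive in_subalg (G : Cxy -> Prop) : Cxy -> Prop :=
| subalg_const c : in_subalg G (cstxy c)
| subalg_gen f : G f -> in_subalg G f
| subalg_add f g : in_subalg G f -> in_subalg G g -> in_subalg G (f + g)
| subalg_mul f g : in_subalg G f -> in_subalg G g -> in_subalg G (f * g).

Definition Rab (a b : CC) : Cxy -> Prop :=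
  in_subalg (fun f => exists2 i : nat, (2 <= i)%N & f = Pab a b i).

Definition A23 (a b : CC) : Cxy -> Prop :=
  in_subalg (fun f => f = Pab a b 2 \/ f = Pab a b 3).

Definition lin_indep_over (A : Cxy -> Prop) (n : nat) (v : 'I_n -> Cxy) : Prop :=
  forall c : 'I_n -> Cxy, (forall j, A (c j)) ->
    \sum_(j < n) c j * v j = 0 -> forall j, c j = 0.

(* M (a torsion-free module over the domain A, both inside C[x,y]) has rank r:
   the maximal number of A-linearly independent elements of M is r
   (equivalently dim over Frac A of Frac A (x)_A M). *)
Definition has_rank_over (A M : Cxy -> Prop) (r : nat) : Prop :=
  (exists v : 'I_r -> Cxy, (forall j, M (v j)) /\ lin_indep_over A v) /\
  (forall v : 'I_r.+1 -> Cxy, (forall j, M (v j)) -> ~ lin_indep_over A v).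

(* Main.v *)
Require Import Defs.
From HB Require Import structures.
From mathcomp Require Import all_boot all_order all_algebra.
From mathcomp Require Import complex Rstruct.
From mathcomp Require Import ring zify.
Import GRing.Theory.
Local Open Scope ring_scope.

Definition det_x2y (a b : CC) : CC := (a ^+ 2 * b ^+ 4 - a ^+ 2 * b ^+ 2 + a * b ^+ 5 + a * b ^+ 4 - a * b ^+ 3 - a * b ^+ 2).
Definition n_x2y_0 (a b : CC) : CC := (- a ^+ 3 * b ^+ 3 - a ^+ 3 * b ^+ 2 - a ^+ 2 * b ^+ 4 - 3 * a ^+ 2 * b ^+ 3 - 2 * a ^+ 2 * b ^+ 2 - a * b ^+ 4 - 2 * a * b ^+ 3 - a * b ^+ 2).
Definition n_x2y_1 (a b : CC) : CC := (a * b ^+ 4 + 3 * a * b ^+ 3 + 2 * a * b ^+ 2).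
Definition n_x2y_2 (a b : CC) : CC := (b ^+ 5 + b ^+ 4 - b ^+ 3 - b ^+ 2).
Definition n_x2y_3 (a b : CC) : CC := (b ^+ 4 + 2 * b ^+ 3 + b ^+ 2).
Lemma id_x2y (a b : CC) : cstxy (det_x2y a b) * (varx ^+ 2 * vary) = cstxy (n_x2y_0 a b) * varx ^+ 3 + cstxy (n_x2y_1 a b) * (varx * Pab a b 2) + cstxy (n_x2y_2 a b) * (vary * Pab a b 2) + cstxy (n_x2y_3 a b) * Pab a b 3.
Proof. rewrite /Pab /cstxy /det_x2y /n_x2y_0 /n_x2y_1 /n_x2y_2 /n_x2y_3. ring. Qed.
Definition det_xy2 (a b : CC) : CC := (a ^+ 2 * b ^+ 4 - a ^+ 2 * b ^+ 2 + a * b ^+ 5 + a * b ^+ 4 - a * b ^+ 3 - a * b ^+ 2).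
Definition n_xy2_0 (a b : CC) : CC := (a ^+ 4 * b ^+ 2 + a ^+ 4 * b + a ^+ 3 * b ^+ 3 + 3 * a ^+ 3 * b ^+ 2 + 2 * a ^+ 3 * b + a ^+ 2 * b ^+ 3 + 2 * a ^+ 2 * b ^+ 2 + a ^+ 2 * b).
Definition n_xy2_1 (a b : CC) : CC := (- 2 * a ^+ 2 * b ^+ 3 - 3 * a ^+ 2 * b ^+ 2 - a ^+ 2 * b + a * b ^+ 3 - a * b).
Definition n_xy2_2 (a b : CC) : CC := (- 2 * a * b ^+ 4 + 2 * a * b ^+ 2).
Definition n_xy2_3 (a b : CC) : CC := (- 2 * a * b ^+ 3 - 2 * a * b ^+ 2).
Lemma id_xy2 (a b : CC) : cstxy (det_xy2 a b) * (varx * vary ^+ 2) = cstxy (n_xy2_0 a b) * varx ^+ 3 + cstxy (n_xy2_1 a b) * (varx * Pab a b 2) + cstxy (n_xy2_2 a b) * (vary * Pab a b 2) + cstxy (n_xy2_3 a b) * Pab a b 3.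
Proof. rewrite /Pab /cstxy /det_xy2 /n_xy2_0 /n_xy2_1 /n_xy2_2 /n_xy2_3. ring. Qed.
Definition det_x4 (a b : CC) : CC := (a ^+ 6 * b ^+ 5 + 2 * a ^+ 6 * b ^+ 4 + a ^+ 6 * b ^+ 3 + 3 * a ^+ 5 * b ^+ 6 + 9 * a ^+ 5 * b ^+ 5 + 9 * a ^+ 5 * b ^+ 4 + 3 * a ^+ 5 * b ^+ 3 + 3 * a ^+ 4 * b ^+ 7 + 13 * a ^+ 4 * b ^+ 6 + 20 * a ^+ 4 * b ^+ 5 + 13 * a ^+ 4 * b ^+ 4 + 3 * a ^+ 4 * b ^+ 3 + a ^+ 3 * b ^+ 8 + 7 * a ^+ 3 * b ^+ 7 + 16 * a ^+ 3 * b ^+ 6 + 16 * a ^+ 3 * b ^+ 5 + 7 * a ^+ 3 * b ^+ 4 + a ^+ 3 * b ^+ 3 + a ^+ 2 * b ^+ 8 + 4 * a ^+ 2 * b ^+ 7 + 6 * a ^+ 2 * b ^+ 6 + 4 * a ^+ 2 * b ^+ 5 + a ^+ 2 * b ^+ 4).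
Definition n_x4_0 (a b : CC) : CC := (- a ^+ 2 * b ^+ 7 + 2 * a ^+ 2 * b ^+ 5 - a ^+ 2 * b ^+ 3 - a * b ^+ 8 - a * b ^+ 7 + 2 * a * b ^+ 6 + 2 * a * b ^+ 5 - a * b ^+ 4 - a * b ^+ 3).
Definition n_x4_1 (a b : CC) : CC := (- a ^+ 3 * b ^+ 7 + a ^+ 3 * b ^+ 6 + 5 * a ^+ 3 * b ^+ 5 + 3 * a ^+ 3 * b ^+ 4 - a ^+ 2 * b ^+ 8 + a ^+ 2 * b ^+ 7 + 9 * a ^+ 2 * b ^+ 6 + 11 * a ^+ 2 * b ^+ 5 + 4 * a ^+ 2 * b ^+ 4 + a * b ^+ 8 + 4 * a * b ^+ 7 + 6 * a * b ^+ 6 + 4 * a * b ^+ 5 + a * b ^+ 4).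
Definition n_x4_2 (a b : CC) : CC := (- a ^+ 2 * b ^+ 8 - 2 * a ^+ 2 * b ^+ 7 + 2 * a ^+ 2 * b ^+ 5 + a ^+ 2 * b ^+ 4 - a * b ^+ 9 - 3 * a * b ^+ 8 - 2 * a * b ^+ 7 + 2 * a * b ^+ 6 + 3 * a * b ^+ 5 + a * b ^+ 4).
Definition n_x4_3 (a b : CC) : CC := (a ^+ 4 * b ^+ 6 + 4 * a ^+ 4 * b ^+ 5 + 5 * a ^+ 4 * b ^+ 4 + 2 * a ^+ 4 * b ^+ 3 + 4 * a ^+ 3 * b ^+ 7 + 9 * a ^+ 3 * b ^+ 6 + 10 * a ^+ 3 * b ^+ 5 + 9 * a ^+ 3 * b ^+ 4 + 4 * a ^+ 3 * b ^+ 3 + 3 * a ^+ 2 * b ^+ 8 + 7 * a ^+ 2 * b ^+ 7 + 5 * a ^+ 2 * b ^+ 6 + 3 * a ^+ 2 * b ^+ 5 + 4 * a ^+ 2 * b ^+ 4 + 2 * a ^+ 2 * b ^+ 3).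
Definition n_x4_4 (a b : CC) : CC := (- a ^+ 3 * b ^+ 7 - a ^+ 3 * b ^+ 6 + a ^+ 3 * b ^+ 5 + a ^+ 3 * b ^+ 4 + a * b ^+ 9 + 3 * a * b ^+ 8 + 2 * a * b ^+ 7 - 2 * a * b ^+ 6 - 3 * a * b ^+ 5 - a * b ^+ 4).
Lemma id_x4 (a b : CC) : cstxy (det_x4 a b) * (varx ^+ 4) = cstxy (n_x4_0 a b) * (Pab a b 2 ^+ 2) + cstxy (n_x4_1 a b) * (varx * Pab a b 3) + cstxy (n_x4_2 a b) * (vary * Pab a b 3) + cstxy (n_x4_3 a b) * (varx ^+ 2 * Pab a b 2) + cstxy (n_x4_4 a b) * (varx * vary * Pab a b 2).
Proof. rewrite /Pab /cstxy /det_x4 /n_x4_0 /n_x4_1 /n_x4_2 /n_x4_3 /n_x4_4. ring. Qed.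
Definition det_x3y (a b : CC) : CC := (a ^+ 6 * b ^+ 5 + 2 * a ^+ 6 * b ^+ 4 + a ^+ 6 * b ^+ 3 + 3 * a ^+ 5 * b ^+ 6 + 9 * a ^+ 5 * b ^+ 5 + 9 * a ^+ 5 * b ^+ 4 + 3 * a ^+ 5 * b ^+ 3 + 3 * a ^+ 4 * b ^+ 7 + 13 * a ^+ 4 * b ^+ 6 + 20 * a ^+ 4 * b ^+ 5 + 13 * a ^+ 4 * b ^+ 4 + 3 * a ^+ 4 * b ^+ 3 + a ^+ 3 * b ^+ 8 + 7 * a ^+ 3 * b ^+ 7 + 16 * a ^+ 3 * b ^+ 6 + 16 * a ^+ 3 * b ^+ 5 + 7 * a ^+ 3 * b ^+ 4 + a ^+ 3 * b ^+ 3 + a ^+ 2 * b ^+ 8 + 4 * a ^+ 2 * b ^+ 7 + 6 * a ^+ 2 * b ^+ 6 + 4 * a ^+ 2 * b ^+ 5 + a ^+ 2 * b ^+ 4).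
Definition n_x3y_0 (a b : CC) : CC := (a ^+ 3 * b ^+ 6 + a ^+ 3 * b ^+ 5 - a ^+ 3 * b ^+ 4 - a ^+ 3 * b ^+ 3 + a ^+ 2 * b ^+ 7 + 3 * a ^+ 2 * b ^+ 6 + a ^+ 2 * b ^+ 5 - 3 * a ^+ 2 * b ^+ 4 - 2 * a ^+ 2 * b ^+ 3 + a * b ^+ 7 + 2 * a * b ^+ 6 - 2 * a * b ^+ 4 - a * b ^+ 3).
Definition n_x3y_1 (a b : CC) : CC := (a ^+ 4 * b ^+ 6 + a ^+ 4 * b ^+ 5 - a ^+ 4 * b ^+ 4 - a ^+ 4 * b ^+ 3 + a ^+ 3 * b ^+ 7 + 3 * a ^+ 3 * b ^+ 6 + a ^+ 3 * b ^+ 5 - 3 * a ^+ 3 * b ^+ 4 - 2 * a ^+ 3 * b ^+ 3 + a ^+ 2 * b ^+ 7 + 2 * a ^+ 2 * b ^+ 6 - 2 * a ^+ 2 * b ^+ 4 - a ^+ 2 * b ^+ 3).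
Definition n_x3y_2 (a b : CC) : CC := (a ^+ 3 * b ^+ 7 + 3 * a ^+ 3 * b ^+ 6 + 3 * a ^+ 3 * b ^+ 5 + a ^+ 3 * b ^+ 4 + a ^+ 2 * b ^+ 8 + 5 * a ^+ 2 * b ^+ 7 + 9 * a ^+ 2 * b ^+ 6 + 7 * a ^+ 2 * b ^+ 5 + 2 * a ^+ 2 * b ^+ 4 + a * b ^+ 8 + 4 * a * b ^+ 7 + 6 * a * b ^+ 6 + 4 * a * b ^+ 5 + a * b ^+ 4).
Definition n_x3y_3 (a b : CC) : CC := (- 2 * a ^+ 4 * b ^+ 6 - 2 * a ^+ 4 * b ^+ 5 + 2 * a ^+ 4 * b ^+ 4 + 2 * a ^+ 4 * b ^+ 3 - 2 * a ^+ 3 * b ^+ 7 - 6 * a ^+ 3 * b ^+ 6 - 2 * a ^+ 3 * b ^+ 5 + 6 * a ^+ 3 * b ^+ 4 + 4 * a ^+ 3 * b ^+ 3 - 2 * a ^+ 2 * b ^+ 7 - 4 * a ^+ 2 * b ^+ 6 + 4 * a ^+ 2 * b ^+ 4 + 2 * a ^+ 2 * b ^+ 3).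
Definition n_x3y_4 (a b : CC) : CC := (2 * a ^+ 4 * b ^+ 6 + 5 * a ^+ 4 * b ^+ 5 + 4 * a ^+ 4 * b ^+ 4 + a ^+ 4 * b ^+ 3 + 2 * a ^+ 3 * b ^+ 7 + 9 * a ^+ 3 * b ^+ 6 + 14 * a ^+ 3 * b ^+ 5 + 9 * a ^+ 3 * b ^+ 4 + 2 * a ^+ 3 * b ^+ 3 + 2 * a ^+ 2 * b ^+ 7 + 7 * a ^+ 2 * b ^+ 6 + 9 * a ^+ 2 * b ^+ 5 + 5 * a ^+ 2 * b ^+ 4 + a ^+ 2 * b ^+ 3).
Lemma id_x3y (a b : CC) : cstxy (det_x3y a b) * (varx ^+ 3 * vary) = cstxy (n_x3y_0 a b) * (Pab a b 2 ^+ 2) + cstxy (n_x3y_1 a b) * (varx * Pab a b 3) + cstxy (n_x3y_2 a b) * (vary * Pab a b 3) + cstxy (n_x3y_3 a b) * (varx ^+ 2 * Pab a b 2) + cstxy (n_x3y_4 a b) * (varx * vary * Pab a b 2).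
Proof. rewrite /Pab /cstxy /det_x3y /n_x3y_0 /n_x3y_1 /n_x3y_2 /n_x3y_3 /n_x3y_4. ring. Qed.

Lemma cstxyM (c d : CC) : cstxy (c * d) = cstxy c * cstxy d.
Proof. by rewrite /cstxy !rmorphM. Qed.
Lemma cstxy1 : cstxy 1 = 1.
Proof. by rewrite /cstxy !rmorph1. Qed.
Lemma cstxy0 : cstxy 0 = 0.
Proof. by rewrite /cstxy !rmorph0. Qed.

Lemma cst_div (d : CC) (t r : Cxy) : d != 0 -> cstxy d * t = r -> t = cstxy (d^-1) * r.
Proof.
move=> d0 <-; rewrite mulrA -cstxyM mulVf // cstxy1 mul1r //.
Qed.
Arguments cst_div {d t r}.

Lemma A_c a b c : A23 a b (cstxy c). Proof. exact: subalg_const. Qed.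
Lemma A_D a b f g : A23 a b f -> A23 a b g -> A23 a b (f + g). Proof. exact: subalg_add. Qed.
Lemma A_M a b f g : A23 a b f -> A23 a b g -> A23 a b (f * g). Proof. exact: subalg_mul. Qed.
Lemma A_P2 a b : A23 a b (Pab a b 2). Proof. by apply: subalg_gen; left. Qed.
Lemma A_P3 a b : A23 a b (Pab a b 3). Proof. by apply: subalg_gen; right. Qed.
Lemma A_0 a b : A23 a b 0. Proof. rewrite -cstxy0; exact: A_c. Qed.
Lemma A_1 a b : A23 a b 1. Proof. rewrite -cstxy1; exact: A_c. Qed.
Lemma A_N a b f : A23 a b f -> A23 a b (- f).
Proof. move=> h; have -> : - f = cstxy (-1) * f by rewrite /cstxy !rmorphN !rmorph1 mulN1r.
by apply: A_M => //; exact: A_c. Qed.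

Definition Mspan (a b : CC) (f : Cxy) : Prop :=
  exists c0 c1 c2 c3 c4 c5,
   A23 a b c0 /\ A23 a b c1 /\ A23 a b c2 /\ A23 a b c3 /\ A23 a b c4 /\ A23 a b c5 /\
   f = c0 + c1 * varx + c2 * vary + c3 * varx ^+ 2 + c4 * (varx * vary) + c5 * varx ^+ 3.

Lemma M_add a b f g : Mspan a b f -> Mspan a b g -> Mspan a b (f + g).
Proof.
move=> [c0 [c1 [c2 [c3 [c4 [c5 [h0 [h1 [h2 [h3 [h4 [h5 ->]]]]]]]]]]]].
move=> [d0 [d1 [d2 [d3 [d4 [d5 [k0 [k1 [k2 [k3 [k4 [k5 ->]]]]]]]]]]]].
exists (c0+d0), (c1+d1), (c2+d2), (c3+d3), (c4+d4), (c5+d5).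
do 6 (split; first by apply: A_D).
ring.
Qed.

Lemma M_scale a b g f : A23 a b g -> Mspan a b f -> Mspan a b (g * f).
Proof.
move=> hg [c0 [c1 [c2 [c3 [c4 [c5 [h0 [h1 [h2 [h3 [h4 [h5 ->]]]]]]]]]]]].
exists (g*c0), (g*c1), (g*c2), (g*c3), (g*c4), (g*c5).
do 6 (split; first by apply: A_M).
ring.
Qed.

Lemma M_c a b c : Mspan a b (cstxy c).
Proof.
exists (cstxy c), 0, 0, 0, 0, 0.
do 6 (split; first by (exact: A_c || exact: A_0)).
ring.
Qed.

Lemma nzp1 (a : CC) : a != -1 -> a + 1 != 0.
Proof. by rewrite addr_eq0. Qed.
Lemma nzm (a c : CC) : a != c -> a - c != 0.
Proof. by rewrite subr_eq0. Qed.

Lemma det3_nz (a b : CC) : a != 0 -> b != 0 -> b != -1 -> a + b != -1 -> b != 1 ->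
  det_x2y a b != 0.
Proof.
move=> ha hb hb1 hab1 hb'.
have -> : det_x2y a b = a * b^+2 * (b+1) * (a+b+1) * (b-1) by rewrite /det_x2y; ring.
by rewrite !mulf_neq0 ?expf_neq0 ?nzp1 ?nzm.
Qed.
Arguments det3_nz {a b}.

Lemma det4_nz (a b : CC) : a != 0 -> a != -1 -> b != 0 -> b != -1 -> a + b != 0 -> a + b != -1 ->
  det_x4 a b != 0.
Proof.
move=> ha ha1 hb hb1 hab hab1.
have -> : det_x4 a b = a^+2 * b^+3 * (a+1) * (b+1)^+2 * (a+b) * (a+b+1)^+2 by rewrite /det_x4; ring.
by rewrite !mulf_neq0 ?expf_neq0 ?nzp1.
Qed.
Arguments det4_nz {a b}.

Definition Hyps (a b : CC) : Prop :=
  [/\ a != 0, a != -1, b != 0, b != -1 & [/\ a + b != 0, a + b != -1, a != b, a != 1 & b != 1]].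

Lemma M_x a b f : Hyps a b -> Mspan a b f -> Mspan a b (varx * f).
Proof.
move=> [ha ha1 hb hb1 [hab hab1 hne ha' hb']].
move=> [c0 [c1 [c2 [c3 [c4 [c5 [h0 [h1 [h2 [h3 [h4 [h5 ->]]]]]]]]]]]].
have E1 := cst_div (det3_nz ha hb hb1 hab1 hb') (id_x2y a b).
have E2 := cst_div (det4_nz ha ha1 hb hb1 hab hab1) (id_x4 a b).
set k := cstxy (det_x2y a b)^-1 in E1.
set m := cstxy (det_x4 a b)^-1 in E2.
set P2 := Pab a b 2 in E1 E2 *.
set P3 := Pab a b 3 in E1 E2 *.
have hk : A23 a b k by exact: A_c.
have hm : A23 a b m by exact: A_c.
have hP2 : A23 a b P2 by exact: A_P2.
have hP3 : A23 a b P3 by exact: A_P3.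
have cA : forall t, A23 a b (cstxy t) by move=> t; exact: A_c.
exists (c4 * k * cstxy (n_x2y_3 a b) * P3 + c5 * m * cstxy (n_x4_0 a b) * P2 ^+ 2),
  (c0 + c4 * k * cstxy (n_x2y_1 a b) * P2 + c5 * m * cstxy (n_x4_1 a b) * P3),
  (c4 * k * cstxy (n_x2y_2 a b) * P2 + c5 * m * cstxy (n_x4_2 a b) * P3),
  (c1 + c5 * m * cstxy (n_x4_3 a b) * P2),
  (c2 + c5 * m * cstxy (n_x4_4 a b) * P2),
  (c3 + c4 * k * cstxy (n_x2y_0 a b)).
do 6 (split; first by repeat (apply: A_D || apply: A_M || rewrite expr2) => //).
transitivity (c0 * varx + c1 * varx^+2 + c2 * (varx * vary) + c3 * varx^+3
   + c4 * (varx^+2 * vary) + c5 * varx ^+ 4); first by ring.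
rewrite E1 E2; ring.
Qed.

Lemma id_y2 (a b : CC) : cstxy (b * (1 + b)) * vary ^+ 2 =
  Pab a b 2 - cstxy (a * (1 + a)) * varx ^+ 2 - cstxy (2 * a * b) * (varx * vary).
Proof. rewrite /Pab /cstxy; ring. Qed.

Lemma M_y a b f : Hyps a b -> Mspan a b f -> Mspan a b (vary * f).
Proof.
move=> [ha ha1 hb hb1 [hab hab1 hne ha' hb']].
move=> [c0 [c1 [c2 [c3 [c4 [c5 [h0 [h1 [h2 [h3 [h4 [h5 ->]]]]]]]]]]]].
have E1 := cst_div (det3_nz ha hb hb1 hab1 hb') (id_x2y a b).
have E3 : det_xy2 a b != 0 by exact: (det3_nz ha hb hb1 hab1 hb').
have E4 : det_x3y a b != 0 by exact: (det4_nz ha ha1 hb hb1 hab hab1).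
have E0 : b * (1 + b) != 0 by rewrite mulf_neq0 // addrC nzp1.
move: (cst_div E3 (id_xy2 a b)) => E5.
move: (cst_div E4 (id_x3y a b)) => E6.
move: (cst_div E0 (id_y2 a b)) => E7.
set k := cstxy (det_x2y a b)^-1 in E1.
set l := cstxy (det_xy2 a b)^-1 in E5.
set t := cstxy (det_x3y a b)^-1 in E6.
set j := cstxy (b * (1 + b))^-1 in E7.
set P2 := Pab a b 2 in E1 E5 E6 E7 *.
set P3 := Pab a b 3 in E1 E5 E6 E7 *.
have hk : A23 a b k by exact: A_c.
have hl : A23 a b l by exact: A_c.
have ht : A23 a b t by exact: A_c.
have hj : A23 a b j by exact: A_c.
have hP2 : A23 a b P2 by exact: A_P2.
have hP3 : A23 a b P3 by exact: A_P3.
have cA : forall t, A23 a b (cstxy t) by move=> t'; exact: A_c.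
exists (c2 * j * P2 + c3 * k * cstxy (n_x2y_3 a b) * P3 + c4 * l * cstxy (n_xy2_3 a b) * P3
          + c5 * t * cstxy (n_x3y_0 a b) * P2 ^+ 2),
  (c3 * k * cstxy (n_x2y_1 a b) * P2 + c4 * l * cstxy (n_xy2_1 a b) * P2 + c5 * t * cstxy (n_x3y_1 a b) * P3),
  (c0 + c3 * k * cstxy (n_x2y_2 a b) * P2 + c4 * l * cstxy (n_xy2_2 a b) * P2 + c5 * t * cstxy (n_x3y_2 a b) * P3),
  (- (c2 * j * cstxy (a * (1 + a))) + c5 * t * cstxy (n_x3y_3 a b) * P2),
  (c1 - c2 * j * cstxy (2 * a * b) + c5 * t * cstxy (n_x3y_4 a b) * P2),
  (c3 * k * cstxy (n_x2y_0 a b) + c4 * l * cstxy (n_xy2_0 a b)).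
do 6 (split; first by repeat (apply: A_D || apply: A_M || apply: A_N || rewrite expr2) => //).
transitivity (c0 * vary + c1 * (varx * vary) + c2 * vary^+2 + c3 * (varx^+2 * vary)
   + c4 * (varx * vary ^+ 2) + c5 * (varx ^+ 3 * vary)); first by ring.
rewrite E1 E5 E6 E7; ring.
Qed.

Lemma M_inner a b (c : {poly CC}) : Hyps a b -> Mspan a b (c%:P).
Proof.
move=> H; elim/poly_ind: c => [|p k IH].
  by have := M_c a b 0; rewrite cstxy0 ?rmorph0.
rewrite rmorphD rmorphM /=.
apply: M_add; last by exact: M_c.
rewrite mulrC; exact: M_x.
Qed.

Lemma M_all a b (f : Cxy) : Hyps a b -> Mspan a b f.
Proof.
move=> H; elim/poly_ind: f => [|p c IH].
  by have := M_c a b 0; rewrite cstxy0 ?rmorph0.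
apply: M_add; last by exact: M_inner.
rewrite mulrC; exact: M_y.
Qed.

Lemma dep_lemma (R : idomainType) (S : R -> Prop)
  (S1 : S 1) (S0 : S 0) (SD : forall x y, S x -> S y -> S (x + y))
  (SM : forall x y, S x -> S y -> S (x * y)) (SN : forall x, S x -> S (- x)) (n : nat) :
  forall C : 'I_n.+1 -> 'I_n -> R, (forall k i, S (C k i)) ->
  exists c : 'I_n.+1 -> R, (forall k, S (c k)) /\ (exists k, c k != 0) /\
     forall i, \sum_(k < n.+1) c k * C k i = 0.
Proof.
have SS : forall (m : nat) (F : 'I_m -> R), (forall k, S (F k)) -> S (\sum_(k < m) F k).
  move=> m F hF; elim/big_rec: _ => // k x _ hx; exact: SD.
elim: n => [|n IH] C hC.
  exists (fun _ => 1); split=> //; split; first by exists ord0; rewrite oner_neq0.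
  by case.
pose Q := [exists p, C p ord_max != 0].
pose p : 'I_n.+2 := if [pick p | C p ord_max != 0] is Some p then p else ord0.
pose d := if Q then C p ord_max else 1.
have hd : d != 0.
  rewrite /d /p; case: pickP => [q hq|hn].
    by have -> : Q by apply/existsP; exists q.
  have -> : Q = false by apply/existsP => -[q hq]; move: (hn q); rewrite hq.
  exact: oner_neq0.
have hdS : S d by rewrite /d; case: ifP => _; [exact: hC | exact: S1].
have hrel : forall k : 'I_n.+1, (d - C p ord_max) * C (lift p k) ord_max = 0.
  move=> k; rewrite /d /p; case: pickP => [q hq|hn].
    have -> : Q by apply/existsP; exists q.
    by rewrite subrr mul0r.

  case: ifP => [/existsP [q hq]|_]; first by move: (hn q); rewrite hq.
  by move: (hn (lift ord0 k)) => /negbFE/eqP ->; rewrite mulr0.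
pose C' (k : 'I_n.+1) (i : 'I_n) := d * C (lift p k) (lift ord_max i) - C (lift p k) ord_max * C p (lift ord_max i).
have hC' : forall k i, S (C' k i).
  move=> k i; rewrite /C'; apply: SD; first by apply: SM.
  by apply: SN; apply: SM.
have [c' [hc'S [[k0 hk0] hc'E]]] := IH C' hC'.
pose c (k : 'I_n.+2) := if unlift p k is Some k' then c' k' * d
   else - \sum_(k' < n.+1) c' k' * C (lift p k') ord_max.
have cp : c p = - \sum_(k' < n.+1) c' k' * C (lift p k') ord_max by rewrite /c unlift_none.
have cl : forall k', c (lift p k') = c' k' * d by move=> k'; rewrite /c liftK.
exists c; split.
  move=> k; rewrite /c; case: (unlift p k) => [k'|]; first by apply: SM.
  by apply: SN; apply: SS => k'; apply: SM.
split.
  by exists (lift p k0); rewrite cl mulf_neq0.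
move=> i; rewrite (bigD1_ord p) //= cp.
under eq_bigr => k _ do rewrite cl.
case: (unliftP ord_max i) => [i'|] -> .
  transitivity (\sum_(k < n.+1) c' k * C' k i'); last exact: hc'E i'.
  rewrite mulNr mulr_suml -sumrN -big_split /=.
  by apply: eq_bigr => k _; rewrite /C'; ring.
rewrite mulNr mulr_suml.
rewrite -sumrN -big_split /=; apply: big1 => k _.
have := hrel k.
move=> h; transitivity (c' k * ((d - C p ord_max) * C (lift p k) ord_max)); first by ring.
by rewrite h mulr0.
Qed.

Definition e6 (i : 'I_6) : Cxy := nth 0 [:: 1; varx; vary; varx ^+ 2; varx * vary; varx ^+ 3] i.

Lemma M_fun a b f : Hyps a b -> exists cv : 'I_6 -> Cxy, (forall i, A23 a b (cv i)) /\
   f = \sum_(i < 6) cv i * e6 i.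
Proof.
move=> H; have [c0 [c1 [c2 [c3 [c4 [c5 [h0 [h1 [h2 [h3 [h4 [h5 ->]]]]]]]]]]]] := M_all a b f H.
exists (fun i : 'I_6 => nth 0 [:: c0; c1; c2; c3; c4; c5] i); split.
  by case=> [[|[|[|[|[|[|?]]]]]] ?] //=.
rewrite !big_ord_recr big_ord0 /= /e6 /=; ring.
Qed.

Lemma upper_bound a b : Hyps a b -> forall v : 'I_7 -> Cxy,
   ~ lin_indep_over (A23 a b) v.
Proof.
move=> H v hind.
have [C hC] := fin_all_exists (fun k => M_fun a b (v k) H).
have hCA : forall k i, A23 a b (C k i) by move=> k i; case: (hC k) => h _; exact: h.
have [c [hcS [[k0 hk0] hcE]]] := @dep_lemma _ (A23 a b) (A_1 a b) (A_0 a b) (@A_D a b) (@A_M a b) (@A_N a b) 6 C hCA.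
have := hind c hcS.
have -> : \sum_(j < 7) c j * v j = 0.
  transitivity (\sum_(j < 7) \sum_(i < 6) c j * (C j i * e6 i)).
    apply: eq_bigr => j _; case: (hC j) => _ ->; exact: mulr_sumr.
  rewrite exchange_big /=; apply: big1 => i _.
  transitivity ((\sum_(j < 7) c j * C j i) * e6 i); last by rewrite hcE mul0r.
  rewrite mulr_suml; apply: eq_bigr => j _; exact: mulrA.
by move=> /(_ erefl k0) /eqP; rewrite (negbTE hk0).
Qed.


Lemma coef_compZX (R : comNzRingType) (p : {poly R}) (c : R) (i : nat) :
  (p \Po (c *: 'X))`_i = p`_i * c ^+ i.
Proof.
elim/poly_ind: p i => [|p k IH] i; first by rewrite comp_poly0 !coef0 mul0r.
rewrite comp_polyD comp_polyM comp_polyX comp_polyC.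
rewrite coefD coefC -scalerAr coefZ coefMX coefD coefMX coefC.
case: i => [|i] /=; first by rewrite ?mulr0 ?add0r ?addr0 expr0 mulr1.
by rewrite IH addr0 exprS; ring.
Qed.

Definition Tm (R : comNzRingType) (G : {poly R}) (al pi : R) (d : nat) : {poly R} :=
  (map_poly polyC G).[pi%:P * 'X^3] * (al%:P * 'X^d).
Arguments Tm {R}.

Lemma coefTm (R : comNzRingType) (G : {poly R}) (al pi : R) (d m : nat) :
  (Tm G al pi d)`_m = if (m < d)%N then 0 else
     if (3 %| (m - d))%N then al * (G`_((m - d) %/ 3) * pi ^+ ((m - d) %/ 3)) else 0.
Proof.
rewrite /Tm mulrCA coefCM coefMXn.
have -> : (map_poly polyC G).[pi%:P * 'X^3] = (G \Po (pi *: 'X)) \Po 'X^3.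
  rewrite -comp_polyA comp_polyZ comp_polyX -mul_polyC; by [].
case: ifP => _; first by rewrite mulr0.
by rewrite coef_comp_poly_Xn // ; case: ifP => _; rewrite ?coef_compZX ?mulr0.
Qed.

Lemma coefTm_same (R : comNzRingType) (G : {poly R}) (al pi : R) (r t u n : nat) :
  (Tm G al pi (r + 3 * (t + u)))`_(r + 3 * (t + n)) =
    if (n < u)%N then 0 else al * (G`_(n - u) * pi ^+ (n - u)).
Proof.
rewrite coefTm.
have -> : (r + 3 * (t + n) < r + 3 * (t + u))%N = (n < u)%N by lia.
case: ifP => // /negbT; rewrite -leqNgt => hun.
have -> : (r + 3 * (t + n) - (r + 3 * (t + u)))%N = (3 * (n - u))%N by lia.
by rewrite dvdn_mulr // mulKn.
Qed.

Lemma coefTm_diff (R : comNzRingType) (G : {poly R}) (al pi : R) (r r' t n : nat) :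
  (r < 3)%N -> (r' < 3)%N -> r != r' ->
  (Tm G al pi (r' + 3 * t))`_(r + 3 * n) = 0.
Proof.
move=> hr hr' hne; rewrite coefTm; case: ifP => // /negbT; rewrite -leqNgt => hle.
case: ifP => // hd; exfalso.
move: hd => /dvdnP [k hk].
move/eqP: hne; lia.
Qed.
Lemma pair_zero (F : fieldType) (G H : {poly F}) (a1 a2 b1 b2 p1 p2 : F) (m : nat) :
  p1 != 0 -> p2 != 0 -> a1 * b2 * p1 ^+ m != a2 * b1 * p2 ^+ m ->
  (forall n, a1 * (G`_n * p1 ^+ n) + (if (n < m)%N then 0 else b1 * (H`_(n - m) * p1 ^+ (n - m))) = 0) ->
  (forall n, a2 * (G`_n * p2 ^+ n) + (if (n < m)%N then 0 else b2 * (H`_(n - m) * p2 ^+ (n - m))) = 0) ->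
  G = 0 /\ H = 0.
Proof.
move=> hp1 hp2 hD E1 E2.
have hG : forall n, G`_n = 0.
  move=> n; have := E1 n; have := E2 n.
  case: ltnP => hn; rewrite ?addr0.
    move=> /eqP e2 /eqP e1; apply/eqP; apply: contraR hD => hg.
    move: e1 e2; rewrite !mulf_eq0 !expf_eq0 (negbTE hg) (negbTE hp1) (negbTE hp2) !andbF !orbF.
    by move=> /eqP -> /eqP ->; rewrite !mul0r.
  move=> e2 e1.
  have e : G`_n * (p1 ^+ (n - m) * p2 ^+ (n - m)) * (a1 * b2 * p1 ^+ m - a2 * b1 * p2 ^+ m) = 0.
    have hn1 : p1 ^+ n = p1 ^+ (n - m) * p1 ^+ m by rewrite -exprD subnK.
    have hn2 : p2 ^+ n = p2 ^+ (n - m) * p2 ^+ m by rewrite -exprD subnK.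
    rewrite hn1 hn2 in e1 e2.
    transitivity (b2 * p2 ^+ (n - m) * (a1 * (G`_n * (p1 ^+ (n - m) * p1 ^+ m)) + b1 * (H`_(n - m) * p1 ^+ (n - m)))
       - b1 * p1 ^+ (n - m) * (a2 * (G`_n * (p2 ^+ (n - m) * p2 ^+ m)) + b2 * (H`_(n - m) * p2 ^+ (n - m)))); first by ring.
    by rewrite e1 e2 !mulr0 subr0.
  move/eqP: e; rewrite !mulf_eq0 !expf_eq0 (negbTE hp1) (negbTE hp2) !andbF !orbF subr_eq0 (negbTE hD) orbF.
  by move/eqP.
have hH : forall k, H`_k = 0.
  move=> k; have := E1 (k + m); have := E2 (k + m).
  rewrite hG !mul0r !mulr0 !add0r ltnNge leq_addl /= addnK.
  move=> /eqP e2 /eqP e1; apply/eqP; apply: contraR hD => hh.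
  move: e1 e2; rewrite !mulf_eq0 !expf_eq0 (negbTE hh) (negbTE hp1) (negbTE hp2) !andbF !orbF.
  by move=> /eqP -> /eqP ->; rewrite !mulr0 !mul0r.
by split; apply/polyP => i; rewrite coef0 ?hG ?hH.
Qed.
Arguments pair_zero {F G H a1 a2 b1 b2 p1 p2 m}.
Arguments coefTm_same {R}.

Lemma six_zero (F : fieldType) (g0 h0 g1 h1 g2 h2 : {poly F}) (p1 p2 : F)
  (a01 a02 b01 b02 a11 a12 b11 b12 a21 a22 b21 b22 : F) (m1 m2 : nat) :
  p1 != 0 -> p2 != 0 ->
  a01 * b02 * p1 ^+ 2 != a02 * b01 * p2 ^+ 2 ->
  a11 * b12 * p1 ^+ m1 != a12 * b11 * p2 ^+ m1 ->
  a21 * b22 * p1 ^+ m2 != a22 * b21 * p2 ^+ m2 ->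
  Tm g0 a01 p1 (0 + 3 * (0 + 0)) + Tm h0 b01 p1 (0 + 3 * (0 + 2)) + Tm g1 a11 p1 (1 + 3 * (1 + 0))
   + Tm h1 b11 p1 (1 + 3 * (1 + m1)) + Tm g2 a21 p1 (2 + 3 * (1 + 0)) + Tm h2 b21 p1 (2 + 3 * (1 + m2)) = 0 ->
  Tm g0 a02 p2 (0 + 3 * (0 + 0)) + Tm h0 b02 p2 (0 + 3 * (0 + 2)) + Tm g1 a12 p2 (1 + 3 * (1 + 0))
   + Tm h1 b12 p2 (1 + 3 * (1 + m1)) + Tm g2 a22 p2 (2 + 3 * (1 + 0)) + Tm h2 b22 p2 (2 + 3 * (1 + m2)) = 0 ->
  g0 = 0 /\ h0 = 0 /\ g1 = 0 /\ h1 = 0 /\ g2 = 0 /\ h2 = 0.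
Proof.
move=> hp1 hp2 D0 D1 D2 E1 E2.
have C0 : forall (p : F) (a b c d e f : F),
  (Tm g0 a p (0 + 3 * (0 + 0)) + Tm h0 b p (0 + 3 * (0 + 2)) + Tm g1 c p (1 + 3 * (1 + 0))
   + Tm h1 d p (1 + 3 * (1 + m1)) + Tm g2 e p (2 + 3 * (1 + 0)) + Tm h2 f p (2 + 3 * (1 + m2)) = 0) ->
  forall n, a * (g0`_n * p ^+ n) + (if (n < 2)%N then 0 else b * (h0`_(n - 2) * p ^+ (n - 2))) = 0.
  move=> p a b c d e f E n.
  have := congr1 (fun q : {poly F} => q`_(0 + 3 * (0 + n))) E.
  rewrite /= !coefD coef0 !coefTm_same (coefTm_diff _ _ _ _ _ _ (1 + 0)) // (coefTm_diff _ _ _ _ _ _ (1 + m1)) //.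
  rewrite (coefTm_diff _ _ _ _ _ _ (1 + 0)) // (coefTm_diff _ _ _ _ _ _ (1 + m2)) //.
  by rewrite ltn0 subn0 !addr0.
have C1 : forall (p : F) (a b c d e f : F),
  (Tm g0 a p (0 + 3 * (0 + 0)) + Tm h0 b p (0 + 3 * (0 + 2)) + Tm g1 c p (1 + 3 * (1 + 0))
   + Tm h1 d p (1 + 3 * (1 + m1)) + Tm g2 e p (2 + 3 * (1 + 0)) + Tm h2 f p (2 + 3 * (1 + m2)) = 0) ->
  forall n, c * (g1`_n * p ^+ n) + (if (n < m1)%N then 0 else d * (h1`_(n - m1) * p ^+ (n - m1))) = 0.
  move=> p a b c d e f E n.
  have := congr1 (fun q : {poly F} => q`_(1 + 3 * (1 + n))) E.
  rewrite /= !coefD coef0 !coefTm_same (coefTm_diff _ _ _ _ _ _ (0 + 0)) // (coefTm_diff _ _ _ _ _ _ (0 + 2)) //.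
  rewrite (coefTm_diff _ _ _ _ _ _ (1 + 0)) // (coefTm_diff _ _ _ _ _ _ (1 + m2)) //.
  by rewrite ltn0 subn0 !add0r !addr0.
have C2 : forall (p : F) (a b c d e f : F),
  (Tm g0 a p (0 + 3 * (0 + 0)) + Tm h0 b p (0 + 3 * (0 + 2)) + Tm g1 c p (1 + 3 * (1 + 0))
   + Tm h1 d p (1 + 3 * (1 + m1)) + Tm g2 e p (2 + 3 * (1 + 0)) + Tm h2 f p (2 + 3 * (1 + m2)) = 0) ->
  forall n, e * (g2`_n * p ^+ n) + (if (n < m2)%N then 0 else f * (h2`_(n - m2) * p ^+ (n - m2))) = 0.
  move=> p a b c d e f E n.
  have := congr1 (fun q : {poly F} => q`_(2 + 3 * (1 + n))) E.
  rewrite /= !coefD coef0 !coefTm_same (coefTm_diff _ _ _ _ _ _ (0 + 0)) // (coefTm_diff _ _ _ _ _ _ (0 + 2)) //.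
  rewrite (coefTm_diff _ _ _ _ _ _ (1 + 0)) // (coefTm_diff _ _ _ _ _ _ (1 + m1)) //.
  by rewrite ltn0 subn0 !add0r.
have [-> ->] := pair_zero hp1 hp2 D0 (C0 _ _ _ _ _ _ _ E1) (C0 _ _ _ _ _ _ _ E2).
have [-> ->] := pair_zero hp1 hp2 D1 (C1 _ _ _ _ _ _ _ E1) (C1 _ _ _ _ _ _ _ E2).
have [-> ->] := pair_zero hp1 hp2 D2 (C2 _ _ _ _ _ _ _ E1) (C2 _ _ _ _ _ _ _ E2).
by [].
Qed.

Lemma cfu1 (a b : CC) : commr_rmorph (polyC \o polyC : CC -> Cxy) (Pab a b 2).
Proof. by move=> x; exact: mulrC. Qed.
Notation hm a b := (horner_morph (cfu1 a b)).
Lemma cfu2 (a b : CC) : commr_rmorph (hm a b) (Pab a b 3).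
Proof. by move=> x; exact: mulrC. Qed.
Notation ev a b := (horner_morph (cfu2 a b)).

Lemma cfg (U : CC) : commr_rmorph (polyC : CC -> {poly CC}) (U%:P * 'X).
Proof. by move=> x; exact: mulrC. Qed.
Notation gU U := (horner_morph (cfg U)).
Lemma cfP (U V : CC) : commr_rmorph (gU U) (V%:P * 'X).
Proof. by move=> x; exact: mulrC. Qed.
Notation Phi U V := (horner_morph (cfP U V)).

Lemma ev_c a b c : ev a b (c%:P%:P) = cstxy c.
Proof. by rewrite horner_morphC /= horner_morphC. Qed.
Lemma ev_s a b : ev a b ('X%:P) = Pab a b 2.
Proof. by rewrite horner_morphC /= horner_morphX. Qed.
Lemma ev_t a b : ev a b 'X = Pab a b 3.
Proof. by rewrite horner_morphX. Qed.

Lemma A_image a b f : A23 a b f -> exists q, ev a b q = f.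
Proof.
elim=> [c|g [->|->]|g h _ [q1 <-] _ [q2 <-]|g h _ [q1 <-] _ [q2 <-]].
- by exists (c%:P%:P); rewrite ev_c.
- by exists ('X%:P); rewrite ev_s.
- by exists 'X; rewrite ev_t.
- by exists (q1 + q2); rewrite rmorphD.
- by exists (q1 * q2); rewrite rmorphM.
Qed.

Lemma Phi_c U V c : Phi U V (cstxy c) = c%:P.
Proof. by rewrite /cstxy horner_morphC /= horner_morphC. Qed.
Lemma Phi_x U V : Phi U V varx = U%:P * 'X.
Proof. by rewrite /varx horner_morphC /= horner_morphX. Qed.
Lemma Phi_y U V : Phi U V vary = V%:P * 'X.
Proof. by rewrite /vary horner_morphX. Qed.

Definition rho (a b U V : CC) (j : nat) : CC := a * U ^+ j + b * V ^+ j + (- (a * U + b * V)) ^+ j.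

Lemma Phi_P a b U V j : Phi U V (Pab a b j) = (rho a b U V j)%:P * 'X^j.
Proof.
rewrite /Pab !rmorphD !rmorphM !rmorphXn !rmorphB !rmorphN !rmorphM /= !Phi_c Phi_x Phi_y /rho.
have e3 : - (a%:P * (U%:P * 'X)) - b%:P * (V%:P * 'X) = (-(a*U + b*V))%:P * 'X.
  by rewrite rmorphN rmorphD !rmorphM; ring.
rewrite e3 !exprMn rmorphN; ring.
Qed.

Lemma Phi_ev a b U V q : Phi U V (Pab a b 2) = 0 ->
  Phi U V (ev a b q) = (map_poly polyC (map_poly (coefp 0) q)).[Phi U V (Pab a b 3)].
Proof.
move=> h2.
have -> : ev a b q = (map_poly (hm a b) q).[Pab a b 3] by [].
rewrite -horner_map -map_poly_comp -map_poly_comp.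
congr (_.[_]); apply: eq_map_poly => c /=.
have -> : hm a b c = (map_poly (polyC \o polyC : CC -> Cxy) c).[Pab a b 2] by [].
rewrite -horner_map /=.
set z := (X in _.[X]); have -> : z = 0 by exact: h2.
rewrite -map_poly_comp.
have -> : map_poly (Phi U V \o (polyC \o polyC : CC -> Cxy)) c = map_poly polyC c.
  by apply: eq_map_poly => k /=; rewrite -[k%:P%:P]/(cstxy k) Phi_c.
by rewrite -[0 : {poly CC}]/(polyC 0) horner_map horner_coef0.
Qed.

Definition alp2 (a b : CC) : CC := 0.
Definition bet2 (a b : CC) : CC := 0.
Definition alp3 (a b : CC) : CC := (a ^+ 6 * b + 3 * a ^+ 5 * b ^+ 2 + 3 * a ^+ 5 * b + 2 * a ^+ 4 * b ^+ 3 + 6 * a ^+ 4 * b ^+ 2 + 3 * a ^+ 4 * b + 2 * a ^+ 3 * b ^+ 3 + 3 * a ^+ 3 * b ^+ 2 + a ^+ 3 * b).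
Definition bet3 (a b : CC) : CC := (a ^+ 5 * b + a ^+ 4 * b ^+ 2 + a ^+ 4 * b - a ^+ 3 * b - a ^+ 2 * b ^+ 2 - a ^+ 2 * b).
Definition alp4 (a b : CC) : CC := (a ^+ 8 * b ^+ 2 + a ^+ 8 * b + 2 * a ^+ 7 * b ^+ 3 + 2 * a ^+ 7 * b ^+ 2 + 4 * a ^+ 7 * b + a ^+ 6 * b ^+ 4 - 4 * a ^+ 6 * b ^+ 3 + a ^+ 6 * b ^+ 2 + 6 * a ^+ 6 * b - 5 * a ^+ 5 * b ^+ 4 - 12 * a ^+ 5 * b ^+ 3 + a ^+ 5 * b ^+ 2 + 4 * a ^+ 5 * b - 5 * a ^+ 4 * b ^+ 4 - 4 * a ^+ 4 * b ^+ 3 + 2 * a ^+ 4 * b ^+ 2 + a ^+ 4 * b + a ^+ 3 * b ^+ 4 + 2 * a ^+ 3 * b ^+ 3 + a ^+ 3 * b ^+ 2).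
Definition bet4 (a b : CC) : CC := (- 4 * a ^+ 6 * b ^+ 2 - 4 * a ^+ 5 * b ^+ 3 - 4 * a ^+ 5 * b ^+ 2 + 4 * a ^+ 4 * b ^+ 2 + 4 * a ^+ 3 * b ^+ 3 + 4 * a ^+ 3 * b ^+ 2).
Definition alp5 (a b : CC) : CC := (a ^+ 10 * b - 5 * a ^+ 9 * b ^+ 3 + 5 * a ^+ 9 * b - 10 * a ^+ 8 * b ^+ 4 - 10 * a ^+ 8 * b ^+ 3 + 10 * a ^+ 8 * b - 5 * a ^+ 7 * b ^+ 5 - 5 * a ^+ 7 * b ^+ 3 + 10 * a ^+ 7 * b + 9 * a ^+ 6 * b ^+ 5 + 20 * a ^+ 6 * b ^+ 4 - 5 * a ^+ 6 * b ^+ 3 + 5 * a ^+ 6 * b + 9 * a ^+ 5 * b ^+ 5 - 10 * a ^+ 5 * b ^+ 3 + a ^+ 5 * b - 5 * a ^+ 4 * b ^+ 5 - 10 * a ^+ 4 * b ^+ 4 - 5 * a ^+ 4 * b ^+ 3).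
Definition bet5 (a b : CC) : CC := (- a ^+ 9 * b ^+ 2 - 2 * a ^+ 8 * b ^+ 3 - 2 * a ^+ 8 * b ^+ 2 - a ^+ 7 * b ^+ 4 + 8 * a ^+ 7 * b ^+ 3 - a ^+ 7 * b ^+ 2 + 10 * a ^+ 6 * b ^+ 4 + 10 * a ^+ 6 * b ^+ 3 - 10 * a ^+ 5 * b ^+ 3 + a ^+ 5 * b ^+ 2 - 10 * a ^+ 4 * b ^+ 4 - 8 * a ^+ 4 * b ^+ 3 + 2 * a ^+ 4 * b ^+ 2 + a ^+ 3 * b ^+ 4 + 2 * a ^+ 3 * b ^+ 3 + a ^+ 3 * b ^+ 2).
Definition alp6 (a b : CC) : CC := (- a ^+ 12 * b ^+ 3 + a ^+ 12 * b - 3 * a ^+ 11 * b ^+ 4 - 3 * a ^+ 11 * b ^+ 3 + 6 * a ^+ 11 * b - 3 * a ^+ 10 * b ^+ 5 + 9 * a ^+ 10 * b ^+ 4 - 3 * a ^+ 10 * b ^+ 3 + 15 * a ^+ 10 * b - a ^+ 9 * b ^+ 6 + 27 * a ^+ 9 * b ^+ 5 + 27 * a ^+ 9 * b ^+ 4 - a ^+ 9 * b ^+ 3 + 20 * a ^+ 9 * b + 15 * a ^+ 8 * b ^+ 6 + 15 * a ^+ 8 * b ^+ 5 + 15 * a ^+ 8 * b ^+ 4 + 15 * a ^+ 8 * b - 14 * a ^+ 7 * b ^+ 6 - 30 * a ^+ 7 * b ^+ 5 + 15 * a ^+ 7 * b ^+ 4 - a ^+ 7 * b ^+ 3 + 6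 * a ^+ 7 * b - 14 * a ^+ 6 * b ^+ 6 + 15 * a ^+ 6 * b ^+ 5 + 27 * a ^+ 6 * b ^+ 4 - 3 * a ^+ 6 * b ^+ 3 + a ^+ 6 * b + 15 * a ^+ 5 * b ^+ 6 + 27 * a ^+ 5 * b ^+ 5 + 9 * a ^+ 5 * b ^+ 4 - 3 * a ^+ 5 * b ^+ 3 - a ^+ 4 * b ^+ 6 - 3 * a ^+ 4 * b ^+ 5 - 3 * a ^+ 4 * b ^+ 4 - a ^+ 4 * b ^+ 3).
Definition bet6 (a b : CC) : CC := (6 * a ^+ 10 * b ^+ 3 + 12 * a ^+ 9 * b ^+ 4 + 12 * a ^+ 9 * b ^+ 3 + 6 * a ^+ 8 * b ^+ 5 - 8 * a ^+ 8 * b ^+ 4 + 6 * a ^+ 8 * b ^+ 3 - 20 * a ^+ 7 * b ^+ 5 - 20 * a ^+ 7 * b ^+ 4 + 20 * a ^+ 6 * b ^+ 4 - 6 * a ^+ 6 * b ^+ 3 + 20 * a ^+ 5 * b ^+ 5 + 8 * a ^+ 5 * b ^+ 4 - 12 * a ^+ 5 * b ^+ 3 - 6 * a ^+ 4 * b ^+ 5 - 12 * a ^+ 4 * b ^+ 4 - 6 * a ^+ 4 * b ^+ 3).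
Definition alp7 (a b : CC) : CC := (a ^+ 14 * b + 7 * a ^+ 13 * b ^+ 4 + 7 * a ^+ 13 * b + 21 * a ^+ 12 * b ^+ 5 + 21 * a ^+ 12 * b ^+ 4 + 21 * a ^+ 12 * b + 21 * a ^+ 11 * b ^+ 6 + 7 * a ^+ 11 * b ^+ 5 + 21 * a ^+ 11 * b ^+ 4 + 35 * a ^+ 11 * b + 7 * a ^+ 10 * b ^+ 7 - 49 * a ^+ 10 * b ^+ 6 - 49 * a ^+ 10 * b ^+ 5 + 7 * a ^+ 10 * b ^+ 4 + 35 * a ^+ 10 * b - 35 * a ^+ 9 * b ^+ 7 - 49 * a ^+ 9 * b ^+ 6 - 35 * a ^+ 9 * b ^+ 5 + 21 * a ^+ 9 * b + 20 * a ^+ 8 * b ^+ 7 + 42 * a ^+ 8 * b ^+ 6 - 35 * a ^+ 8 * b ^+ 5 + 7 * a ^+ 8 * b ^+ 4 + 7 * a ^+ 8 * b + 20 * a ^+ 7 * b ^+ 7 - 49 * a ^+ 7 * b ^+ 6 - 49 * a ^+ 7 * b ^+ 5 + 21 * a ^+ 7 * b ^+ 4 + a ^+ 7 * b - 35 * a ^+ 6 * b ^+ 7 - 49 * a ^+ 6 * b ^+ 6 + 7 * a ^+ 6 * b ^+ 5 + 21 * a ^+ 6 * b ^+ 4 + 7 * a ^+ 5 * b ^+ 7 + 21 * a ^+ 5 * b ^+ 6 + 21 * a ^+ 5 * b ^+ 5 + 7 * a ^+ 5 * b ^+ 4).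
Definition bet7 (a b : CC) : CC := (a ^+ 13 * b ^+ 3 + 3 * a ^+ 12 * b ^+ 4 + 3 * a ^+ 12 * b ^+ 3 + 3 * a ^+ 11 * b ^+ 5 - 15 * a ^+ 11 * b ^+ 4 + 3 * a ^+ 11 * b ^+ 3 + a ^+ 10 * b ^+ 6 - 39 * a ^+ 10 * b ^+ 5 - 39 * a ^+ 10 * b ^+ 4 + a ^+ 10 * b ^+ 3 - 21 * a ^+ 9 * b ^+ 6 - 7 * a ^+ 9 * b ^+ 5 - 21 * a ^+ 9 * b ^+ 4 + 35 * a ^+ 8 * b ^+ 6 + 35 * a ^+ 8 * b ^+ 5 - 35 * a ^+ 7 * b ^+ 5 + 21 * a ^+ 7 * b ^+ 4 - a ^+ 7 * b ^+ 3 - 35 * a ^+ 6 * b ^+ 6 + 7 * a ^+ 6 * b ^+ 5 + 39 * a ^+ 6 * b ^+ 4 - 3 * a ^+ 6 * b ^+ 3 + 21 * a ^+ 5 * b ^+ 6 + 39 * a ^+ 5 * b ^+ 5 + 15 * a ^+ 5 * b ^+ 4 - 3 * a ^+ 5 * b ^+ 3 - a ^+ 4 * b ^+ 6 - 3 * a ^+ 4 * b ^+ 5 - 3 * a ^+ 4 * b ^+ 4 - a ^+ 4 * b ^+ 3).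
Definition alp8 (a b : CC) : CC := (a ^+ 16 * b ^+ 4 + a ^+ 16 * b + 4 * a ^+ 15 * b ^+ 5 + 4 * a ^+ 15 * b ^+ 4 + 8 * a ^+ 15 * b + 6 * a ^+ 14 * b ^+ 6 - 16 * a ^+ 14 * b ^+ 5 + 6 * a ^+ 14 * b ^+ 4 + 28 * a ^+ 14 * b + 4 * a ^+ 13 * b ^+ 7 - 72 * a ^+ 13 * b ^+ 6 - 72 * a ^+ 13 * b ^+ 5 + 4 * a ^+ 13 * b ^+ 4 + 56 * a ^+ 13 * b + a ^+ 12 * b ^+ 8 - 80 * a ^+ 12 * b ^+ 7 - 92 * a ^+ 12 * b ^+ 6 - 80 * a ^+ 12 * b ^+ 5 + a ^+ 12 * b ^+ 4 + 70 * a ^+ 12 * b - 28 * a ^+ 11 * b ^+ 8 + 56 * a ^+ 11 * b ^+ 7 + 56 * a ^+ 11 * b ^+ 6 - 28 * a ^+ 11 * b ^+ 5 + 56 * a ^+ 11 * b + 70 * a ^+ 10 * b ^+ 8 + 112 * a ^+ 10 * b ^+ 7 + 70 * a ^+ 10 * b ^+ 6 + 28 * a ^+ 10 * b - 27 * a ^+ 9 * b ^+ 8 - 56 * a ^+ 9 * b ^+ 7 + 70 * a ^+ 9 * b ^+ 6 - 28 * a ^+ 9 * b ^+ 5 + a ^+ 9 * b ^+ 4 + 8 * a ^+ 9 * b - 27 * a ^+ 8 * b ^+ 8 + 112 * a ^+ 8 * b ^+ 7 + 56 * a ^+ 8 * b ^+ 6 - 80 * a ^+ 8 * b ^+ 5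 + 4 * a ^+ 8 * b ^+ 4 + a ^+ 8 * b + 70 * a ^+ 7 * b ^+ 8 + 56 * a ^+ 7 * b ^+ 7 - 92 * a ^+ 7 * b ^+ 6 - 72 * a ^+ 7 * b ^+ 5 + 6 * a ^+ 7 * b ^+ 4 - 28 * a ^+ 6 * b ^+ 8 - 80 * a ^+ 6 * b ^+ 7 - 72 * a ^+ 6 * b ^+ 6 - 16 * a ^+ 6 * b ^+ 5 + 4 * a ^+ 6 * b ^+ 4 + a ^+ 5 * b ^+ 8 + 4 * a ^+ 5 * b ^+ 7 + 6 * a ^+ 5 * b ^+ 6 + 4 * a ^+ 5 * b ^+ 5 + a ^+ 5 * b ^+ 4).
Definition bet8 (a b : CC) : CC := (- 8 * a ^+ 14 * b ^+ 4 - 24 * a ^+ 13 * b ^+ 5 - 24 * a ^+ 13 * b ^+ 4 - 24 * a ^+ 12 * b ^+ 6 + 8 * a ^+ 12 * b ^+ 5 - 24 * a ^+ 12 * b ^+ 4 - 8 * a ^+ 11 * b ^+ 7 + 88 * a ^+ 11 * b ^+ 6 + 88 * a ^+ 11 * b ^+ 5 - 8 * a ^+ 11 * b ^+ 4 + 56 * a ^+ 10 * b ^+ 7 + 56 * a ^+ 10 * b ^+ 6 + 56 * a ^+ 10 * b ^+ 5 - 56 * a ^+ 9 * b ^+ 7 - 56 * a ^+ 9 * b ^+ 6 + 56 * a ^+ 8 * b ^+ 6 - 56 * a ^+ 8 * b ^+ 5 + 8 * a ^+ 8 * b ^+ 4 + 56 * a ^+ 7 * b ^+ 7 - 56 * a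 ^+ 7 * b ^+ 6 - 88 * a ^+ 7 * b ^+ 5 + 24 * a ^+ 7 * b ^+ 4 - 56 * a ^+ 6 * b ^+ 7 - 88 * a ^+ 6 * b ^+ 6 - 8 * a ^+ 6 * b ^+ 5 + 24 * a ^+ 6 * b ^+ 4 + 8 * a ^+ 5 * b ^+ 7 + 24 * a ^+ 5 * b ^+ 6 + 24 * a ^+ 5 * b ^+ 5 + 8 * a ^+ 5 * b ^+ 4).
Lemma rho_red2 (a b t : CC) : t ^+ 2 = - (a * b * (1 + a + b)) ->
  rho a b (- (a * b) + t) (a * (1 + a)) 2 = alp2 a b + t * bet2 a b.
Proof.
move=> ht.
have -> : rho a b (- (a * b) + t) (a * (1 + a)) 2 = alp2 a b + t * bet2 a b +
   (t ^+ 2 + a * b * (1 + a + b)) * (a ^+ 2 + a).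
  by rewrite /rho /alp2 /bet2; ring.
by rewrite ht addNr mul0r addr0.
Qed.
Lemma rho_red3 (a b t : CC) : t ^+ 2 = - (a * b * (1 + a + b)) ->
  rho a b (- (a * b) + t) (a * (1 + a)) 3 = alp3 a b + t * bet3 a b.
Proof.
move=> ht.
have -> : rho a b (- (a * b) + t) (a * (1 + a)) 3 = alp3 a b + t * bet3 a b +
   (t ^+ 2 + a * b * (1 + a + b)) * (- 3 * a ^+ 3 * b - a ^+ 3 * t - 3 * a ^+ 2 * b + a * t).
  by rewrite /rho /alp3 /bet3; ring.
by rewrite ht addNr mul0r addr0.
Qed.
Lemma rho_red4 (a b t : CC) : t ^+ 2 = - (a * b * (1 + a + b)) ->
  rho a b (- (a * b) + t) (a * (1 + a)) 4 = alp4 a b + t * bet4 a b.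
Proof.
move=> ht.
have -> : rho a b (- (a * b) + t) (a * (1 + a)) 4 = alp4 a b + t * bet4 a b +
   (t ^+ 2 + a * b * (1 + a + b)) * (- a ^+ 6 * b - a ^+ 5 * b ^+ 2 - a ^+ 5 * b + 6 * a ^+ 4 * b ^+ 2 + 4 * a ^+ 4 * b * t + a ^+ 4 * t ^+ 2 + 6 * a ^+ 3 * b ^+ 2 - a ^+ 3 * b - a ^+ 2 * b ^+ 2 - 4 * a ^+ 2 * b * t - a ^+ 2 * b + a * t ^+ 2).
  by rewrite /rho /alp4 /bet4; ring.
by rewrite ht addNr mul0r addr0.
Qed.
Lemma rho_red5 (a b t : CC) : t ^+ 2 = - (a * b * (1 + a + b)) ->
  rho a b (- (a * b) + t) (a * (1 + a)) 5 = alp5 a b + t * bet5 a b.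
Proof.
move=> ht.
have -> : rho a b (- (a * b) + t) (a * (1 + a)) 5 = alp5 a b + t * bet5 a b +
   (t ^+ 2 + a * b * (1 + a + b)) * (5 * a ^+ 7 * b ^+ 2 + a ^+ 7 * b * t + 5 * a ^+ 6 * b ^+ 3 + a ^+ 6 * b ^+ 2 * t + 5 * a ^+ 6 * b ^+ 2 + a ^+ 6 * b * t - 10 * a ^+ 5 * b ^+ 3 - 10 * a ^+ 5 * b ^+ 2 * t - 5 * a ^+ 5 * b * t ^+ 2 - a ^+ 5 * t ^+ 3 - 10 * a ^+ 4 * b ^+ 3 + 5 * a ^+ 4 * b ^+ 2 + 5 * a ^+ 3 * b ^+ 3 + 10 * a ^+ 3 * b ^+ 2 * t + 5 * a ^+ 3 * b ^+ 2 - a ^+ 3 * b * t - a ^+ 2 * b ^+ 2 * t - 5 * a ^+ 2 * b * t ^+ 2 - a ^+ 2 * b * t + a * t ^+ 3).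
  by rewrite /rho /alp5 /bet5; ring.
by rewrite ht addNr mul0r addr0.
Qed.
Lemma rho_red6 (a b t : CC) : t ^+ 2 = - (a * b * (1 + a + b)) ->
  rho a b (- (a * b) + t) (a * (1 + a)) 6 = alp6 a b + t * bet6 a b.
Proof.
move=> ht.
have -> : rho a b (- (a * b) + t) (a * (1 + a)) 6 = alp6 a b + t * bet6 a b +
   (t ^+ 2 + a * b * (1 + a + b)) * (a ^+ 10 * b ^+ 2 + 2 * a ^+ 9 * b ^+ 3 + 2 * a ^+ 9 * b ^+ 2 + a ^+ 8 * b ^+ 4 - 13 * a ^+ 8 * b ^+ 3 - 6 * a ^+ 8 * b ^+ 2 * t + a ^+ 8 * b ^+ 2 - a ^+ 8 * b * t ^+ 2 - 15 * a ^+ 7 * b ^+ 4 - 6 * a ^+ 7 * b ^+ 3 * t - 15 * a ^+ 7 * b ^+ 3 - a ^+ 7 * b ^+ 2 * t ^+ 2 - 6 * a ^+ 7 * b ^+ 2 * t - a ^+ 7 * b * t ^+ 2 + 15 * a ^+ 6 * b ^+ 4 + 20 * a ^+ 6 * b ^+ 3 * t + 15 * a ^+ 6 * b ^+ 2 * t ^+ 2 + 6 * a ^+ 6 * b * t ^+ 3 + a ^+ 6 * t ^+ 4 + 15 * a ^+ 5 * b ^+ 4 - 15 * a ^+ 5 * b ^+ 3 + a ^+ 5 * b ^+ 2 - 15 * a ^+ 4 * b ^+ 4 - 20 * a ^+ 4 * b ^+ 3 * t - 13 * a ^+ 4 * b ^+ 3 + 6 * a ^+ 4 * b ^+ 2 *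 t + 2 * a ^+ 4 * b ^+ 2 + a ^+ 3 * b ^+ 4 + 6 * a ^+ 3 * b ^+ 3 * t + 2 * a ^+ 3 * b ^+ 3 + 15 * a ^+ 3 * b ^+ 2 * t ^+ 2 + 6 * a ^+ 3 * b ^+ 2 * t + a ^+ 3 * b ^+ 2 - a ^+ 3 * b * t ^+ 2 - a ^+ 2 * b ^+ 2 * t ^+ 2 - 6 * a ^+ 2 * b * t ^+ 3 - a ^+ 2 * b * t ^+ 2 + a * t ^+ 4).
  by rewrite /rho /alp6 /bet6; ring.
by rewrite ht addNr mul0r addr0.
Qed.
Lemma rho_red7 (a b t : CC) : t ^+ 2 = - (a * b * (1 + a + b)) ->
  rho a b (- (a * b) + t) (a * (1 + a)) 7 = alp7 a b + t * bet7 a b.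
Proof.
move=> ht.
have -> : rho a b (- (a * b) + t) (a * (1 + a)) 7 = alp7 a b + t * bet7 a b +
   (t ^+ 2 + a * b * (1 + a + b)) * (- 7 * a ^+ 11 * b ^+ 3 - a ^+ 11 * b ^+ 2 * t - 14 * a ^+ 10 * b ^+ 4 - 2 * a ^+ 10 * b ^+ 3 * t - 14 * a ^+ 10 * b ^+ 3 - 2 * a ^+ 10 * b ^+ 2 * t - 7 * a ^+ 9 * b ^+ 5 - a ^+ 9 * b ^+ 4 * t + 21 * a ^+ 9 * b ^+ 4 + 19 * a ^+ 9 * b ^+ 3 * t - 7 * a ^+ 9 * b ^+ 3 + 7 * a ^+ 9 * b ^+ 2 * t ^+ 2 - a ^+ 9 * b ^+ 2 * t + a ^+ 9 * b * t ^+ 3 + 35 * a ^+ 8 * b ^+ 5 + 21 * a ^+ 8 * b ^+ 4 * t + 35 * a ^+ 8 * b ^+ 4 + 7 * a ^+ 8 * b ^+ 3 * t ^+ 2 + 21 * a ^+ 8 * b ^+ 3 * t + a ^+ 8 * b ^+ 2 * t ^+ 3 + 7 * a ^+ 8 * b ^+ 2 * t ^+ 2 + a ^+ 8 * b * t ^+ 3 - 21 * a ^+ 7 * b ^+ 5 - 35 * a ^+ 7 * b ^+ 4 * t - 35 * a ^+ 7 * b ^+ 3 * t ^+ 2 - 21 * a ^+ 7 * b ^+ 2 * t ^+ 3 - 7 * a ^+ 7 * b * t ^+ 4 - a ^+ 7 * t ^+ 5 - 21 * a ^+ 6 * b ^+ 5 + 35 * a ^+ 6 * b ^+ 4 - 7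 * a ^+ 6 * b ^+ 3 + 35 * a ^+ 5 * b ^+ 5 + 35 * a ^+ 5 * b ^+ 4 * t + 21 * a ^+ 5 * b ^+ 4 - 21 * a ^+ 5 * b ^+ 3 * t - 14 * a ^+ 5 * b ^+ 3 + a ^+ 5 * b ^+ 2 * t - 7 * a ^+ 4 * b ^+ 5 - 21 * a ^+ 4 * b ^+ 4 * t - 14 * a ^+ 4 * b ^+ 4 - 35 * a ^+ 4 * b ^+ 3 * t ^+ 2 - 19 * a ^+ 4 * b ^+ 3 * t - 7 * a ^+ 4 * b ^+ 3 + 7 * a ^+ 4 * b ^+ 2 * t ^+ 2 + 2 * a ^+ 4 * b ^+ 2 * t + a ^+ 3 * b ^+ 4 * t + 7 * a ^+ 3 * b ^+ 3 * t ^+ 2 + 2 * a ^+ 3 * b ^+ 3 * t + 21 * a ^+ 3 * b ^+ 2 * t ^+ 3 + 7 * a ^+ 3 * b ^+ 2 * t ^+ 2 + a ^+ 3 * b ^+ 2 * t - a ^+ 3 * b * t ^+ 3 - a ^+ 2 * b ^+ 2 * t ^+ 3 - 7 * a ^+ 2 * b * t ^+ 4 - a ^+ 2 * b * t ^+ 3 + a * t ^+ 5).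
  by rewrite /rho /alp7 /bet7; ring.
by rewrite ht addNr mul0r addr0.
Qed.
Lemma rho_red8 (a b t : CC) : t ^+ 2 = - (a * b * (1 + a + b)) ->
  rho a b (- (a * b) + t) (a * (1 + a)) 8 = alp8 a b + t * bet8 a b.
Proof.
move=> ht.
have -> : rho a b (- (a * b) + t) (a * (1 + a)) 8 = alp8 a b + t * bet8 a b +
   (t ^+ 2 + a * b * (1 + a + b)) * (- a ^+ 14 * b ^+ 3 - 3 * a ^+ 13 * b ^+ 4 - 3 * a ^+ 13 * b ^+ 3 - 3 * a ^+ 12 * b ^+ 5 + 22 * a ^+ 12 * b ^+ 4 + 8 * a ^+ 12 * b ^+ 3 * t - 3 * a ^+ 12 * b ^+ 3 + a ^+ 12 * b ^+ 2 * t ^+ 2 - a ^+ 11 * b ^+ 6 + 53 * a ^+ 11 * b ^+ 5 + 16 * a ^+ 11 * b ^+ 4 * t + 53 * a ^+ 11 * b ^+ 4 + 2 * a ^+ 11 * b ^+ 3 * t ^+ 2 + 16 * a ^+ 11 * b ^+ 3 * t - a ^+ 11 * b ^+ 3 + 2 * a ^+ 11 * b ^+ 2 * t ^+ 2 + 28 * a ^+ 10 * b ^+ 6 + 8 * a ^+ 10 * b ^+ 5 * t - 14 * a ^+ 10 * b ^+ 5 + a ^+ 10 * b ^+ 4 * t ^+ 2 - 40 * a ^+ 10 * b ^+ 4 * t + 28 * a ^+ 10 * b ^+ 4 - 26 * a ^+ 10 * b ^+ 3 * t ^+ 2 + 8 * a ^+ 10 * b ^+ 3 * t - 8 * a ^+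 10 * b ^+ 2 * t ^+ 3 + a ^+ 10 * b ^+ 2 * t ^+ 2 - a ^+ 10 * b * t ^+ 4 - 70 * a ^+ 9 * b ^+ 6 - 56 * a ^+ 9 * b ^+ 5 * t - 70 * a ^+ 9 * b ^+ 5 - 28 * a ^+ 9 * b ^+ 4 * t ^+ 2 - 56 * a ^+ 9 * b ^+ 4 * t - 8 * a ^+ 9 * b ^+ 3 * t ^+ 3 - 28 * a ^+ 9 * b ^+ 3 * t ^+ 2 - a ^+ 9 * b ^+ 2 * t ^+ 4 - 8 * a ^+ 9 * b ^+ 2 * t ^+ 3 - a ^+ 9 * b * t ^+ 4 + 28 * a ^+ 8 * b ^+ 6 + 56 * a ^+ 8 * b ^+ 5 * t + 70 * a ^+ 8 * b ^+ 4 * t ^+ 2 + 56 * a ^+ 8 * b ^+ 3 * t ^+ 3 + 28 * a ^+ 8 * b ^+ 2 * t ^+ 4 + 8 * a ^+ 8 * b * t ^+ 5 + a ^+ 8 * t ^+ 6 + 28 * a ^+ 7 * b ^+ 6 - 70 * a ^+ 7 * b ^+ 5 + 28 * a ^+ 7 * b ^+ 4 - a ^+ 7 * b ^+ 3 - 70 * a ^+ 6 * b ^+ 6 - 56 * a ^+ 6 * b ^+ 5 * t - 14 * a ^+ 6 * b ^+ 5 + 56 * a ^+ 6 * b ^+ 4 * t + 53 * a ^+ 6 * b ^+ 4 - 8 * a ^+ 6 * b ^+ 3 * t - 3 * a ^+ 6 * b ^+ 3 + 28 * a ^+ 5 * b ^+ 6 + 56 * a ^+ 5 * b ^+ 5 *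 t + 53 * a ^+ 5 * b ^+ 5 + 70 * a ^+ 5 * b ^+ 4 * t ^+ 2 + 40 * a ^+ 5 * b ^+ 4 * t + 22 * a ^+ 5 * b ^+ 4 - 28 * a ^+ 5 * b ^+ 3 * t ^+ 2 - 16 * a ^+ 5 * b ^+ 3 * t - 3 * a ^+ 5 * b ^+ 3 + a ^+ 5 * b ^+ 2 * t ^+ 2 - a ^+ 4 * b ^+ 6 - 8 * a ^+ 4 * b ^+ 5 * t - 3 * a ^+ 4 * b ^+ 5 - 28 * a ^+ 4 * b ^+ 4 * t ^+ 2 - 16 * a ^+ 4 * b ^+ 4 * t - 3 * a ^+ 4 * b ^+ 4 - 56 * a ^+ 4 * b ^+ 3 * t ^+ 3 - 26 * a ^+ 4 * b ^+ 3 * t ^+ 2 - 8 * a ^+ 4 * b ^+ 3 * t - a ^+ 4 * b ^+ 3 + 8 * a ^+ 4 * b ^+ 2 * t ^+ 3 + 2 * a ^+ 4 * b ^+ 2 * t ^+ 2 + a ^+ 3 * b ^+ 4 * t ^+ 2 + 8 * a ^+ 3 * b ^+ 3 * t ^+ 3 + 2 * a ^+ 3 * b ^+ 3 * t ^+ 2 + 28 * a ^+ 3 * b ^+ 2 * t ^+ 4 + 8 * a ^+ 3 * b ^+ 2 * t ^+ 3 + a ^+ 3 * b ^+ 2 * t ^+ 2 - a ^+ 3 * b * t ^+ 4 - a ^+ 2 * b ^+ 2 * t ^+ 4 - 8 * a ^+ 2 * b * t ^+ 5 - a ^+ 2 * b * t ^+ 4 + a * t ^+ 6).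
  by rewrite /rho /alp8 /bet8; ring.
by rewrite ht addNr mul0r addr0.
Qed.

Lemma split_s (q : {poly {poly CC}}) : map_poly (coefp 0) q = 0 ->
  q = map_poly (drop_poly 1) q * ('X)%:P.
Proof.
move=> hg; apply/polyP => i; rewrite coefMC coef_map /=.
have h0 : (q`_i)`_0 = 0 by move: (congr1 (fun p : {poly CC} => p`_i) hg); rewrite coef_map /= coef0.
rewrite -{1}(poly_take_drop 1 (q`_i)) expr1.
have -> : take_poly 1 q`_i = 0.
  apply/polyP => k; rewrite coef_take_poly coef0; case: k => [|k] //=.
by rewrite add0r.
Qed.

Lemma size_split (q : {poly {poly CC}}) (N : nat) :
  (forall i, leq (size q`_i) N.+1) -> forall i, leq (size (map_poly (drop_poly 1) q)`_i) N.
Proof.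
move=> h i; rewrite coef_map /= size_drop_poly.
by rewrite leq_subLR add1n.
Qed.

Lemma ev_split a b (q : {poly {poly CC}}) : map_poly (coefp 0) q = 0 ->
  ev a b q = ev a b (map_poly (drop_poly 1) q) * Pab a b 2.
Proof.
move=> hg; rewrite {1}(split_s q hg) rmorphM /=; congr (_ * _); exact: ev_s.
Qed.

Lemma zero_size (q : {poly {poly CC}}) : (forall i, leq (size q`_i) 0) -> q = 0.
Proof.
move=> h; apply/polyP => i; rewrite coef0; apply/eqP; rewrite -size_poly_eq0.
by rewrite -leqn0.
Qed.

Lemma size_bound (q : {poly {poly CC}}) : forall i, leq (size q`_i) (\max_(j < size q) size (nth 0%R q j)).


Proof.
move=> i; case: (ltnP i (size q)) => hi.
  exact: (@leq_bigmax _ (fun j : 'I_(size q) => size (nth 0%R q j)) (Ordinal hi)).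
by rewrite nth_default // size_poly0.
Qed.

Arguments six_zero {F g0 h0 g1 h1 g2 h2 p1 p2 a01 a02 b01 b02 a11 a12 b11 b12 a21 a22 b21 b22 m1 m2}.
Arguments zero_size {q}.
Arguments size_split {q N}.
Arguments ev_split {a b q}.

Lemma indep_core (a b U1 U2 V p1 p2 : CC) (w0 w1 w2 w3 w4 w5 : Cxy)
  (a01 a02 b01 b02 a11 a12 b11 b12 a21 a22 b21 b22 : CC) (m1 m2 : nat) :
  Phi U1 V (Pab a b 2) = 0 -> Phi U2 V (Pab a b 2) = 0 ->
  Phi U1 V (Pab a b 3) = p1%:P * 'X^3 -> Phi U2 V (Pab a b 3) = p2%:P * 'X^3 ->
  p1 != 0 -> p2 != 0 ->
  a01 * b02 * p1 ^+ 2 != a02 * b01 * p2 ^+ 2 ->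
  a11 * b12 * p1 ^+ m1 != a12 * b11 * p2 ^+ m1 ->
  a21 * b22 * p1 ^+ m2 != a22 * b21 * p2 ^+ m2 ->
  Phi U1 V w0 = a01%:P * 'X^(0 + 3 * (0 + 0)) -> Phi U2 V w0 = a02%:P * 'X^(0 + 3 * (0 + 0)) ->
  Phi U1 V w1 = b01%:P * 'X^(0 + 3 * (0 + 2)) -> Phi U2 V w1 = b02%:P * 'X^(0 + 3 * (0 + 2)) ->
  Phi U1 V w2 = a11%:P * 'X^(1 + 3 * (1 + 0)) -> Phi U2 V w2 = a12%:P * 'X^(1 + 3 * (1 + 0)) ->
  Phi U1 V w3 = b11%:P * 'X^(1 + 3 * (1 + m1)) -> Phi U2 V w3 = b12%:P * 'X^(1 + 3 * (1 + m1)) ->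
  Phi U1 V w4 = a21%:P * 'X^(2 + 3 * (1 + 0)) -> Phi U2 V w4 = a22%:P * 'X^(2 + 3 * (1 + 0)) ->
  Phi U1 V w5 = b21%:P * 'X^(2 + 3 * (1 + m2)) -> Phi U2 V w5 = b22%:P * 'X^(2 + 3 * (1 + m2)) ->
  Pab a b 2 != 0 ->
  forall q0 q1 q2 q3 q4 q5,
  ev a b q0 * w0 + ev a b q1 * w1 + ev a b q2 * w2 + ev a b q3 * w3 + ev a b q4 * w4 + ev a b q5 * w5 = 0 ->
  ev a b q0 = 0 /\ ev a b q1 = 0 /\ ev a b q2 = 0 /\ ev a b q3 = 0 /\ ev a b q4 = 0 /\ ev a b q5 = 0.
Proof.
move=> h21 h22 h31 h32 hp1 hp2 D0 D1 D2 e01 e02 e11 e12 e21 e22 e31 e32 e41 e42 e51 e52 hP2.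
suff main : forall N (q0 q1 q2 q3 q4 q5 : {poly {poly CC}}),
  (forall i, leq (size q0`_i) N) -> (forall i, leq (size q1`_i) N) -> (forall i, leq (size q2`_i) N) ->
  (forall i, leq (size q3`_i) N) -> (forall i, leq (size q4`_i) N) -> (forall i, leq (size q5`_i) N) ->
  ev a b q0 * w0 + ev a b q1 * w1 + ev a b q2 * w2 + ev a b q3 * w3 + ev a b q4 * w4 + ev a b q5 * w5 = 0 ->
  ev a b q0 = 0 /\ ev a b q1 = 0 /\ ev a b q2 = 0 /\ ev a b q3 = 0 /\ ev a b q4 = 0 /\ ev a b q5 = 0.
  move=> q0 q1 q2 q3 q4 q5.
  pose B (q : {poly {poly CC}}) := (\max_(j < size q) size (nth 0%R q j))%N.
  pose N := (B q0 + B q1 + B q2 + B q3 + B q4 + B q5)%N.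
  have hb : forall q : {poly {poly CC}}, leq (B q) N -> forall i, leq (size q`_i) N.
    by move=> q hq i; apply: leq_trans (size_bound q i) hq.
  apply: (main N); apply: hb; rewrite /N; lia.
elim=> [|N IH] q0 q1 q2 q3 q4 q5 hb0 hb1 hb2 hb3 hb4 hb5 E.
  by rewrite (zero_size hb0) (zero_size hb1) (zero_size hb2) (zero_size hb3) (zero_size hb4) (zero_size hb5) !rmorph0.
have E1 := congr1 (Phi U1 V) E.
have E2 := congr1 (Phi U2 V) E.
rewrite rmorph0 !rmorphD !rmorphM /= !Phi_ev // h31 e01 e11 e21 e31 e41 e51 in E1.
rewrite rmorph0 !rmorphD !rmorphM /= !Phi_ev // h32 e02 e12 e22 e32 e42 e52 in E2.
have [g0 [g1 [g2 [g3 [g4 g5]]]]] := six_zero hp1 hp2 D0 D1 D2 E1 E2.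
move: E; rewrite (ev_split g0) (ev_split g1) (ev_split g2) (ev_split g3) (ev_split g4) (ev_split g5).
set r0 := ev a b (map_poly _ q0); set r1 := ev a b (map_poly _ q1); set r2 := ev a b (map_poly _ q2).
set r3 := ev a b (map_poly _ q3); set r4 := ev a b (map_poly _ q4); set r5 := ev a b (map_poly _ q5).
move=> E.
have E' : (r0 * w0 + r1 * w1 + r2 * w2 + r3 * w3 + r4 * w4 + r5 * w5) * Pab a b 2 = 0.
  by rewrite -E; ring.
move/eqP: E'; rewrite mulf_eq0 (negbTE hP2) orbF => /eqP E'.
have := IH _ _ _ _ _ _ (size_split hb0) (size_split hb1) (size_split hb2) (size_split hb3)
   (size_split hb4) (size_split hb5) E'.
rewrite -/r0 -/r1 -/r2 -/r3 -/r4 -/r5.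
by move=> [-> [-> [-> [-> [-> ->]]]]]; rewrite !mul0r.
Qed.

Definition Dd (a b : CC) : CC := - (a * b * (1 + a + b)).
Definition sD (a b : CC) : CC := sqrtc (Dd a b).
Lemma sD2 a b : sD a b ^+ 2 = - (a * b * (1 + a + b)).
Proof. exact: sqr_sqrtc. Qed.
Lemma sDN2 a b : (- sD a b) ^+ 2 = - (a * b * (1 + a + b)).
Proof. by rewrite sqrrN sD2. Qed.

Definition W4 (a b : CC) : CC := a ^+ 2 * b + a ^+ 2 + a * b ^+ 2 - 6 * a * b + a + b ^+ 2 + b.
Definition W5 (a b : CC) : CC := a ^+ 4 * b ^+ 2 - a ^+ 4 * b + a ^+ 4 + 2 * a ^+ 3 * b ^+ 3 - 5 * a ^+ 3 * b ^+ 2 - 5 * a ^+ 3 * b + 2 * a ^+ 3 + a ^+ 2 * b ^+ 4 - 5 * a ^+ 2 * b ^+ 3 + 21 * a ^+ 2 * b ^+ 2 - 5 * a ^+ 2 * b + a ^+ 2 - a * b ^+ 4 - 5 * a * b ^+ 3 - 5 * a * b ^+ 2 - a * b + b ^+ 4 + 2 * b ^+ 3 + b ^+ 2.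

Lemma hyp_nz a b : Hyps a b ->
  [/\ a != 0, b != 0, a + 1 != 0, b + 1 != 0 & [/\ a + b != 0, a + b + 1 != 0, a - b != 0, a - 1 != 0 & b - 1 != 0]].
Proof.
move=> [ha ha1 hb hb1 [hab hab1 hne ha' hb']].
by split=> //; [exact: nzp1 | exact: nzp1 | split=> //; [exact: nzp1 | exact: nzm | exact: nzm | exact: nzm]].
Qed.

Lemma sD_nz a b : Hyps a b -> sD a b != 0.
Proof.
move=> /hyp_nz [ha hb ha1 hb1 [hab hab1 _ _ _]].
rewrite /sD sqrtc_eq0 /Dd oppr_eq0.
have -> : a * b * (1 + a + b) = a * b * (a + b + 1) by ring.
by rewrite !mulf_neq0.
Qed.

Lemma norm_eq (a b al be : CC) : (al + sD a b * be) * (al + - sD a b * be) =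
  al ^+ 2 + a * b * (1 + a + b) * be ^+ 2.
Proof.
have -> : (al + sD a b * be) * (al + - sD a b * be) = al ^+ 2 - sD a b ^+ 2 * be ^+ 2 by ring.
by rewrite sD2; ring.
Qed.

Lemma N3_eq a b : alp3 a b ^+ 2 + a * b * (1 + a + b) * bet3 a b ^+ 2 =
  a ^+ 5 * b ^+ 2 * (a + 1) ^+ 4 * (b + 1) * (a + b) * (a + b + 1) ^+ 2.
Proof. rewrite /alp3 /bet3; ring. Qed.

Lemma N4_eq a b : alp4 a b ^+ 2 + a * b * (1 + a + b) * bet4 a b ^+ 2 =
  a ^+ 6 * b ^+ 2 * (a + 1) ^+ 5 * (b + 1) * (a + b) * (a + b + 1) ^+ 2 *
  W4 a b.
Proof. rewrite /alp4 /bet4 /W4; ring. Qed.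

Lemma N5_eq a b : alp5 a b ^+ 2 + a * b * (1 + a + b) * bet5 a b ^+ 2 =
  a ^+ 7 * b ^+ 2 * (a + 1) ^+ 6 * (b + 1) * (a + b) * (a + b + 1) ^+ 2 *
  W5 a b.
Proof. rewrite /alp5 /bet5 /W5; ring. Qed.

Definition pr3 (a b : CC) : CC :=
  a ^+ 9 * b ^+ 3 * (a + 1) ^+ 7 * (b + 1) * (a + b) * (a + b + 1) ^+ 4 * (a - b) * (a - 1) * (b - 1).

Lemma E0_eq a b : 2 * alp6 a b * alp3 a b * bet3 a b - bet6 a b * alp3 a b ^+ 2
   + a * b * (1 + a + b) * bet6 a b * bet3 a b ^+ 2 = - 2 * pr3 a b.
Proof. rewrite /alp6 /bet6 /alp3 /bet3 /pr3; ring. Qed.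

Lemma E1_eq a b : bet4 a b * alp7 a b * alp3 a b - alp4 a b * bet7 a b * alp3 a b + alp4 a b * alp7 a b * bet3 a b
   + a * b * (1 + a + b) * bet4 a b * bet7 a b * bet3 a b = a * (a + 1) * pr3 a b * (2 * a * b - W4 a b).
Proof. rewrite /alp4 /bet4 /alp7 /bet7 /alp3 /bet3 /pr3 /W4; ring. Qed.

Lemma E2_eq a b : bet5 a b * alp8 a b * alp3 a b - alp5 a b * bet8 a b * alp3 a b + alp5 a b * alp8 a b * bet3 a b
   + a * b * (1 + a + b) * bet5 a b * bet8 a b * bet3 a b =
   a ^+ 2 * (a + 1) ^+ 2 * pr3 a b * (- W5 a b - a * b * (a + b) * (a + 1) * (b + 1)).
Proof. rewrite /alp5 /bet5 /alp8 /bet8 /alp3 /bet3 /pr3 /W5; ring. Qed.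

Import GRing.Theory Num.Theory.

Definition U1 (a b : CC) : CC := - (a * b) + sD a b.
Definition U2 (a b : CC) : CC := - (a * b) + - sD a b.
Definition VV (a : CC) : CC := a * (1 + a).

Lemma diff_ne (X Y Z : CC) : X - Y = Z -> Z != 0 -> X != Y.
Proof. by move=> h hz; apply: contraNneq hz => e; rewrite -h e subrr. Qed.

Lemma two_nz : (2 : CC) != 0.
Proof. by rewrite pnatr_eq0. Qed.

Lemma pr3_nz a b : Hyps a b -> pr3 a b != 0.
Proof.
move=> /hyp_nz [ha hb ha1 hb1 [hab hab1 h1 h2 h3]].
by rewrite /pr3 !mulf_neq0 ?expf_neq0.
Qed.

Lemma PhiP2 a b U : U = U1 a b \/ U = U2 a b -> Phi U (VV a) (Pab a b 2) = 0.
Proof.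
move=> hU; rewrite Phi_P.
have -> : rho a b U (VV a) 2 = 0.
  case: hU => ->; rewrite /U1 /U2 /VV.
    by rewrite (rho_red2 _ _ _ (sD2 a b)) /alp2 /bet2 mulr0 addr0.
  by rewrite (rho_red2 _ _ _ (sDN2 a b)) /alp2 /bet2 mulr0 addr0.
by rewrite rmorph0 mul0r.
Qed.


Lemma p_nz a b : Hyps a b ->
  rho a b (U1 a b) (VV a) 3 != 0 /\ rho a b (U2 a b) (VV a) 3 != 0.
Proof.
move=> H.
have h : rho a b (U1 a b) (VV a) 3 * rho a b (U2 a b) (VV a) 3 =
   a ^+ 5 * b ^+ 2 * (a + 1) ^+ 4 * (b + 1) * (a + b) * (a + b + 1) ^+ 2.
  by rewrite /U1 /U2 /VV (rho_red3 _ _ _ (sD2 a b)) (rho_red3 _ _ _ (sDN2 a b)) norm_eq N3_eq.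
have : rho a b (U1 a b) (VV a) 3 * rho a b (U2 a b) (VV a) 3 != 0.
  move: H => /hyp_nz [ha hb ha1 hb1 [hab hab1 _ _ _]].
  by rewrite h !mulf_neq0 ?expf_neq0.
by rewrite mulf_eq0 negb_or => /andP.
Qed.

Lemma D0_ne a b : Hyps a b ->
  rho a b (U2 a b) (VV a) 6 * rho a b (U1 a b) (VV a) 3 ^+ 2 -
  rho a b (U1 a b) (VV a) 6 * rho a b (U2 a b) (VV a) 3 ^+ 2 != 0.
Proof.
move=> H.
rewrite /U1 /U2 /VV (rho_red3 _ _ _ (sD2 a b)) (rho_red3 _ _ _ (sDN2 a b)).
rewrite (rho_red6 _ _ _ (sD2 a b)) (rho_red6 _ _ _ (sDN2 a b)).
have -> : (alp6 a b + - sD a b * bet6 a b) * (alp3 a b + sD a b * bet3 a b) ^+ 2 -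
   (alp6 a b + sD a b * bet6 a b) * (alp3 a b + - sD a b * bet3 a b) ^+ 2 =
   2 * sD a b * (2 * alp6 a b * alp3 a b * bet3 a b - bet6 a b * alp3 a b ^+ 2
     - sD a b ^+ 2 * bet6 a b * bet3 a b ^+ 2) by ring.
rewrite sD2.
have -> : 2 * alp6 a b * alp3 a b * bet3 a b - bet6 a b * alp3 a b ^+ 2
     - - (a * b * (1 + a + b)) * bet6 a b * bet3 a b ^+ 2 = - 2 * pr3 a b.
  by rewrite -E0_eq; ring.
move: (pr3_nz _ _ H) (sD_nz _ _ H); move: (pr3 a b) (sD a b) => p s hp hs.
by rewrite !mulf_neq0 ?oppr_eq0 ?two_nz.
Qed.

Lemma D1B_ne a b : Hyps a b -> W4 a b = 0 ->
  rho a b (U1 a b) (VV a) 4 * rho a b (U2 a b) (VV a) 7 * rho a b (U1 a b) (VV a) 3 ^+ 1 -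
  rho a b (U2 a b) (VV a) 4 * rho a b (U1 a b) (VV a) 7 * rho a b (U2 a b) (VV a) 3 ^+ 1 != 0.
Proof.
move=> H hW.
rewrite /U1 /U2 /VV (rho_red3 _ _ _ (sD2 a b)) (rho_red3 _ _ _ (sDN2 a b)).
rewrite (rho_red4 _ _ _ (sD2 a b)) (rho_red4 _ _ _ (sDN2 a b)).
rewrite (rho_red7 _ _ _ (sD2 a b)) (rho_red7 _ _ _ (sDN2 a b)).
have -> : (alp4 a b + sD a b * bet4 a b) * (alp7 a b + - sD a b * bet7 a b) * (alp3 a b + sD a b * bet3 a b) ^+ 1 -
   (alp4 a b + - sD a b * bet4 a b) * (alp7 a b + sD a b * bet7 a b) * (alp3 a b + - sD a b * bet3 a b) ^+ 1 =
   2 * sD a b * (bet4 a b * alp7 a b * alp3 a b - alp4 a b * bet7 a b * alp3 a b + alp4 a b * alp7 a b * bet3 a b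
     - sD a b ^+ 2 * bet4 a b * bet7 a b * bet3 a b) by ring.
rewrite sD2.
have -> : bet4 a b * alp7 a b * alp3 a b - alp4 a b * bet7 a b * alp3 a b + alp4 a b * alp7 a b * bet3 a b
     - - (a * b * (1 + a + b)) * bet4 a b * bet7 a b * bet3 a b = a * (a + 1) * pr3 a b * (2 * a * b - W4 a b).
  by rewrite -E1_eq; ring.
rewrite hW subr0.
move: (H) => /hyp_nz [ha hb ha1 hb1 _].
move: (pr3_nz _ _ H) (sD_nz _ _ H); move: (pr3 a b) (sD a b) => p s hp hs.
by rewrite !mulf_neq0 ?two_nz.
Qed.

Lemma D2B_ne a b : Hyps a b -> W5 a b = 0 ->
  rho a b (U1 a b) (VV a) 5 * rho a b (U2 a b) (VV a) 8 * rho a b (U1 a b) (VV a) 3 ^+ 1 -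
  rho a b (U2 a b) (VV a) 5 * rho a b (U1 a b) (VV a) 8 * rho a b (U2 a b) (VV a) 3 ^+ 1 != 0.
Proof.
move=> H hW.
rewrite /U1 /U2 /VV (rho_red3 _ _ _ (sD2 a b)) (rho_red3 _ _ _ (sDN2 a b)).
rewrite (rho_red5 _ _ _ (sD2 a b)) (rho_red5 _ _ _ (sDN2 a b)).
rewrite (rho_red8 _ _ _ (sD2 a b)) (rho_red8 _ _ _ (sDN2 a b)).
have -> : (alp5 a b + sD a b * bet5 a b) * (alp8 a b + - sD a b * bet8 a b) * (alp3 a b + sD a b * bet3 a b) ^+ 1 -
   (alp5 a b + - sD a b * bet5 a b) * (alp8 a b + sD a b * bet8 a b) * (alp3 a b + - sD a b * bet3 a b) ^+ 1 =
   2 * sD a b * (bet5 a b * alp8 a b * alp3 a b - alp5 a b * bet8 a b * alp3 a b + alp5 a b * alp8 a b * bet3 a b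
     - sD a b ^+ 2 * bet5 a b * bet8 a b * bet3 a b) by ring.
rewrite sD2.
have -> : bet5 a b * alp8 a b * alp3 a b - alp5 a b * bet8 a b * alp3 a b + alp5 a b * alp8 a b * bet3 a b
     - - (a * b * (1 + a + b)) * bet5 a b * bet8 a b * bet3 a b =
     a ^+ 2 * (a + 1) ^+ 2 * pr3 a b * (- W5 a b - a * b * (a + b) * (a + 1) * (b + 1)).
  by rewrite -E2_eq; ring.
rewrite hW oppr0 add0r.
move: (H) => /hyp_nz [ha hb ha1 hb1 [hab _ _ _ _]].
move: (pr3_nz _ _ H) (sD_nz _ _ H); move: (pr3 a b) (sD a b) => p s hp hs.
by rewrite !mulf_neq0 ?expf_neq0 ?two_nz // oppr_eq0 !mulf_neq0.
Qed.

Lemma N4_ne a b : Hyps a b -> W4 a b != 0 ->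
  rho a b (U1 a b) (VV a) 4 * rho a b (U2 a b) (VV a) 4 != 0.
Proof.
move=> H hW.
rewrite /U1 /U2 /VV (rho_red4 _ _ _ (sD2 a b)) (rho_red4 _ _ _ (sDN2 a b)) norm_eq N4_eq.
move: H => /hyp_nz [ha hb ha1 hb1 [hab hab1 _ _ _]].
move: (W4 a b) hW => w hw.
by rewrite !mulf_neq0 ?expf_neq0.
Qed.

Lemma N5_ne a b : Hyps a b -> W5 a b != 0 ->
  rho a b (U1 a b) (VV a) 5 * rho a b (U2 a b) (VV a) 5 != 0.
Proof.
move=> H hW.
rewrite /U1 /U2 /VV (rho_red5 _ _ _ (sD2 a b)) (rho_red5 _ _ _ (sDN2 a b)) norm_eq N5_eq.
move: H => /hyp_nz [ha hb ha1 hb1 [hab hab1 _ _ _]].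
move: (W5 a b) hW => w hw.
by rewrite !mulf_neq0 ?expf_neq0.
Qed.

Import GRing.Theory Num.Theory.

Lemma Phi_PP a b U V j k : Phi U V (Pab a b j * Pab a b k) =
  (rho a b U V j * rho a b U V k)%:P * 'X^(j + k).
Proof. rewrite rmorphM /= !Phi_P rmorphM exprD; ring. Qed.

Lemma R_P a b j : (2 <= j)%N -> Rab a b (Pab a b j).
Proof. by move=> hj; apply: subalg_gen; exists j. Qed.

Lemma class1 a b : Hyps a b -> exists (w : Cxy) (m : nat) (c1 c2 : CC),
  [/\ Rab a b w, Phi (U1 a b) (VV a) w = c1%:P * 'X^(1 + 3 * (1 + m)),
      Phi (U2 a b) (VV a) w = c2%:P * 'X^(1 + 3 * (1 + m)) &
      rho a b (U1 a b) (VV a) 4 * c2 * rho a b (U1 a b) (VV a) 3 ^+ m !=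
      rho a b (U2 a b) (VV a) 4 * c1 * rho a b (U2 a b) (VV a) 3 ^+ m].
Proof.
move=> H; case: (eqVneq (W4 a b) 0) => hW.
  exists (Pab a b 7), 1%N, (rho a b (U1 a b) (VV a) 7), (rho a b (U2 a b) (VV a) 7); split.
  - exact: R_P.
  - exact: Phi_P.
  - exact: Phi_P.
  - by rewrite -subr_eq0; exact: D1B_ne.
exists (Pab a b 4 * Pab a b 6), 2%N, (rho a b (U1 a b) (VV a) 4 * rho a b (U1 a b) (VV a) 6),
  (rho a b (U2 a b) (VV a) 4 * rho a b (U2 a b) (VV a) 6); split.
- by apply: subalg_mul; exact: R_P.
- exact: Phi_PP.
- exact: Phi_PP.
rewrite -subr_eq0.
have -> : rho a b (U1 a b) (VV a) 4 * (rho a b (U2 a b) (VV a) 4 * rho a b (U2 a b) (VV a) 6) *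
   rho a b (U1 a b) (VV a) 3 ^+ 2 -
   rho a b (U2 a b) (VV a) 4 * (rho a b (U1 a b) (VV a) 4 * rho a b (U1 a b) (VV a) 6) *
   rho a b (U2 a b) (VV a) 3 ^+ 2 =
   (rho a b (U1 a b) (VV a) 4 * rho a b (U2 a b) (VV a) 4) *
   (rho a b (U2 a b) (VV a) 6 * rho a b (U1 a b) (VV a) 3 ^+ 2 -
    rho a b (U1 a b) (VV a) 6 * rho a b (U2 a b) (VV a) 3 ^+ 2) by ring.
by rewrite mulf_neq0 ?N4_ne ?D0_ne.
Qed.

Lemma class2 a b : Hyps a b -> exists (w : Cxy) (m : nat) (c1 c2 : CC),
  [/\ Rab a b w, Phi (U1 a b) (VV a) w = c1%:P * 'X^(2 + 3 * (1 + m)),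
      Phi (U2 a b) (VV a) w = c2%:P * 'X^(2 + 3 * (1 + m)) &
      rho a b (U1 a b) (VV a) 5 * c2 * rho a b (U1 a b) (VV a) 3 ^+ m !=
      rho a b (U2 a b) (VV a) 5 * c1 * rho a b (U2 a b) (VV a) 3 ^+ m].
Proof.
move=> H; case: (eqVneq (W5 a b) 0) => hW.
  exists (Pab a b 8), 1%N, (rho a b (U1 a b) (VV a) 8), (rho a b (U2 a b) (VV a) 8); split.
  - exact: R_P.
  - exact: Phi_P.
  - exact: Phi_P.
  - by rewrite -subr_eq0; exact: D2B_ne.
exists (Pab a b 5 * Pab a b 6), 2%N, (rho a b (U1 a b) (VV a) 5 * rho a b (U1 a b) (VV a) 6),
  (rho a b (U2 a b) (VV a) 5 * rho a b (U2 a b) (VV a) 6); split.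
- by apply: subalg_mul; exact: R_P.
- exact: Phi_PP.
- exact: Phi_PP.
rewrite -subr_eq0.
have -> : rho a b (U1 a b) (VV a) 5 * (rho a b (U2 a b) (VV a) 5 * rho a b (U2 a b) (VV a) 6) *
   rho a b (U1 a b) (VV a) 3 ^+ 2 -
   rho a b (U2 a b) (VV a) 5 * (rho a b (U1 a b) (VV a) 5 * rho a b (U1 a b) (VV a) 6) *
   rho a b (U2 a b) (VV a) 3 ^+ 2 =
   (rho a b (U1 a b) (VV a) 5 * rho a b (U2 a b) (VV a) 5) *
   (rho a b (U2 a b) (VV a) 6 * rho a b (U1 a b) (VV a) 3 ^+ 2 -
    rho a b (U1 a b) (VV a) 6 * rho a b (U2 a b) (VV a) 3 ^+ 2) by ring.
by rewrite mulf_neq0 ?N5_ne ?D0_ne.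
Qed.

Import GRing.Theory Num.Theory.
Arguments class1 {a b}.
Arguments class2 {a b}.
Arguments p_nz {a b}.
Arguments PhiP2 {a b U}.
Arguments A_image {a b f}.
Arguments indep_core {a b U1 U2 V p1 p2 w0 w1 w2 w3 w4 w5 a01 a02 b01 b02 a11 a12 b11 b12 a21 a22 b21 b22 m1 m2}.

Lemma sum6 (F : 'I_6 -> Cxy) : \sum_(j < 6) F j =
  F (inord 0) + F (inord 1) + F (inord 2) + F (inord 3) + F (inord 4) + F (inord 5).
Proof.
rewrite !big_ord_recr big_ord0 /= add0r.
by repeat congr (_ + _); congr F; apply: val_inj; rewrite /= inordK.
Qed.

Lemma P2_nz a b : Hyps a b -> Pab a b 2 != 0.
Proof.
move=> H; apply/eqP => h0.
have := congr1 (Phi 1 1) h0; rewrite rmorph0 Phi_P => /eqP.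
rewrite mulf_eq0 polyC_eq0 expf_eq0 polyX_eq0 andbF orbF /rho.
have -> : a * 1 ^+ 2 + b * 1 ^+ 2 + (- (a * 1 + b * 1)) ^+ 2 = (a + b) * (a + b + 1) by ring.
by move: H => /hyp_nz [_ _ _ _ [hab hab1 _ _ _]]; rewrite mulf_eq0 (negbTE hab) (negbTE hab1).
Qed.

Arguments P2_nz {a b}.

Lemma lower_bound a b : Hyps a b -> exists v : 'I_6 -> Cxy,
  (forall j, Rab a b (v j)) /\ lin_indep_over (A23 a b) v.
Proof.
move=> H.
have [w3 [m1 [c11 [c12 [hw3 e31 e32 hD1]]]]] := class1 H.
have [w5 [m2 [c21 [c22 [hw5 e51 e52 hD2]]]]] := class2 H.
pose v := fun j : 'I_6 => nth 0 [:: 1; Pab a b 6; Pab a b 4; w3; Pab a b 5; w5] j.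
exists v; split.
  case=> [[|[|[|[|[|[|?]]]]]] ?] //=; rewrite /v /=.
  - by rewrite -cstxy1; exact: subalg_const.
  - exact: R_P.
  - exact: R_P.
  - exact: R_P.
move=> c hc hsum.
have [Q hQ] := fin_all_exists (fun j => A_image (hc j)).
move: hsum; rewrite sum6 -!hQ /v !inordK //= => E.
have [p1 p2] := p_nz H.
have h21 := PhiP2 (or_introl (erefl (U1 a b))).
have h22 := PhiP2 (or_intror (erefl (U2 a b))).
have hD0 : 1 * rho a b (U2 a b) (VV a) 6 * rho a b (U1 a b) (VV a) 3 ^+ 2 !=
   1 * rho a b (U1 a b) (VV a) 6 * rho a b (U2 a b) (VV a) 3 ^+ 2.
  by rewrite !mul1r -subr_eq0; exact: D0_ne.
have f1 : forall U V, Phi U V 1 = 1%:P * 'X^(0 + 3 * (0 + 0)).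
  by move=> U V; rewrite rmorph1 mul1r expr0.
have := indep_core h21 h22 (Phi_P _ _ _ _ 3) (Phi_P _ _ _ _ 3) p1 p2 hD0 hD1 hD2 (f1 _ _) (f1 _ _)
   (Phi_P _ _ _ _ 6) (Phi_P _ _ _ _ 6) (Phi_P _ _ _ _ 4) (Phi_P _ _ _ _ 4) e31 e32
   (Phi_P _ _ _ _ 5) (Phi_P _ _ _ _ 5) e51 e52 (P2_nz H) _ _ _ _ _ _ E.
rewrite !hQ => -[z0 [z1 [z2 [z3 [z4 z5]]]]] j.
rewrite -(inord_val j); case: j => [[|[|[|[|[|[|//]]]]]] pj] //=.
Qed.

Theorem proposition5p8 (a b : CC) :
  a != 0 -> a != -1 -> b != 0 -> b != -1 -> a + b != 0 -> a + b != -1 ->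
  a != b -> a != 1 -> b != 1 ->
  has_rank_over (A23 a b) (Rab a b) 6.
Proof.
move=> h1 h2 h3 h4 h5 h6 h7 h8 h9.
have H : Hyps a b by split => //; split.
split; first exact: (lower_bound a b H).
by move=> v _; exact: (upper_bound a b H).
Qed.
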